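(* Let $f(u,v,s)=\big(u,\ u^2f_{21}(u)+v^2+usf_{24}(u,s),\ u^2f_{31}(u)+v^2f_{32}(u,v,s)+usf_{34}(u,s)\big)$ with $f_{32}=c_0(u,s)+vc_1(u,s)+v^2c_2(u,v^2,s)+v^3c_3(u,v^2,s)$, $c_0(0,0)=0$, $c_3(0,0,0)\ne0$, and $c_1(u,s)=s+usd_1(s)+u^2d_2(s)+u^3d_3(s)+u^4d_4(u,s)$ with $d_2(0)>0$; put $d_{20}=\sqrt{d_2(0)}$. For $\tilde s\ne0$ small, let $u(\tilde s)$ be the smooth function with $c_1(u(\tilde s),-\tilde s^2)=0$ and $u(\tilde s)=\tilde s/d_{20}+O(\tilde s^2)$, so that $f(\cdot,\cdot,-\tilde s^2)$ has a cuspidal cross cap at $(u(\tilde s),0)$. Then the bias $r_b$ and the secondary cuspidal curvature $r_c$ of $f(\cdot,\cdot,-\tilde s^2)$ at $(u(\tilde s),0)$ have the expansions $$r_b=6c_2(0,0,0)+\frac{6\big(-2f_{21}(0)(c_0)_u(0,0)+(c_2)_u(0,0,0)\big)}{d_{20}}\tilde s+O_{\tilde s}(2),$$ $$r_c=45\sqrt2\,c_3(0,0,0)+\frac{45\sqrt2\,(c_3)_u(0,0,0)}{d_{20}}\tilde s+O_{\tilde s}(2).$$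
   Context: Let $h:(\mathbb{R}^2,p)\to\mathbb{R}^3$ be a frontal with singular set $\{v=0\}$ near $p=(u_0,0)$. Let $\tilde\eta$ be a vector field such that along $\{v=0\}$: $\tilde\eta h=0$, $\langle h_u,\tilde\eta^2h\rangle=\langle h_u,\tilde\eta^3h\rangle=0$, where $\tilde\eta^k h$ denotes the $k$-fold iterated directional derivative of $h$ along $\tilde\eta$; and let $\ell\in\mathbb{R}$ satisfy $\tilde\eta^3h(p)=\ell\,\tilde\eta^2h(p)$. The bias is $r_b=\dfrac{|h_u|^2\det(h_u,\tilde\eta^2h,\tilde\eta^4h)}{|h_u\times\tilde\eta^2h|^3}$ at $p$, and the secondary cuspidal curvature is $r_c=\dfrac{|h_u|^{5/2}\det(h_u,\tilde\eta^2h,3\tilde\eta^5h-10\ell\,\tilde\eta^4h)}{|h_u\times\tilde\eta^2h|^{7/2}}$ at $p$. $O_{\tilde s}(n)$ denotes terms of degree at least $n$ in $\tilde s$. *)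

(* Defs.v *)
From Stdlib Require Import Reals List.
From Coquelicot Require Import Coquelicot.
Open Scope R_scope.
Open Scope list_scope.

Definition smooth1 (g : R -> R) : Prop :=
  forall (n : nat) (x : R), ex_derive (Derive_n g n) x.

Definition pdu (g : R -> R -> R) : R -> R -> R :=
  fun x y => Derive (fun t => g t y) x.
Definition pdv (g : R -> R -> R) : R -> R -> R :=
  fun x y => Derive (fun t => g x t) y.

Fixpoint pd2 (w : list bool) (g : R -> R -> R) : R -> R -> R :=
  match w with
  | nil => g
  | true :: w' => pd2 w' (pdu g)
  | false :: w' => pd2 w' (pdv g)
  end.

Definition smooth2 (g : R -> R -> R) : Prop :=
  forall (w : list bool) (x y : R),
    ex_derive (fun t => pd2 w g t y) x /\
    ex_derive (fun t => pd2 w g x t) y /\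
    continuous (fun p : R * R => pd2 w g (fst p) (snd p)) (x, y).

Inductive var3 := X1 | X2 | X3.

Definition pd3_1 (g : R -> R -> R -> R) : R -> R -> R -> R :=
  fun x y z => Derive (fun t => g t y z) x.
Definition pd3_2 (g : R -> R -> R -> R) : R -> R -> R -> R :=
  fun x y z => Derive (fun t => g x t z) y.
Definition pd3_3 (g : R -> R -> R -> R) : R -> R -> R -> R :=
  fun x y z => Derive (fun t => g x y t) z.

Fixpoint pd3 (w : list var3) (g : R -> R -> R -> R) : R -> R -> R -> R :=
  match w with
  | nil => g
  | X1 :: w' => pd3 w' (pd3_1 g)
  | X2 :: w' => pd3 w' (pd3_2 g)
  | X3 :: w' => pd3 w' (pd3_3 g)
  end.

Definition smooth3 (g : R -> R -> R -> R) : Prop :=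
  forall (w : list var3) (x y z : R),
    ex_derive (fun t => pd3 w g t y z) x /\
    ex_derive (fun t => pd3 w g x t z) y /\
    ex_derive (fun t => pd3 w g x y t) z /\
    continuous (fun p : R * R * R => pd3 w g (fst (fst p)) (snd (fst p)) (snd p))
      (x, y, z).

Definition V3 : Type := (R * R * R)%type.
Definition v1 (a : V3) : R := fst (fst a).
Definition v2 (a : V3) : R := snd (fst a).
Definition v3 (a : V3) : R := snd a.
Definition mkV (x y z : R) : V3 := (x, y, z).

Definition vzero : V3 := mkV 0 0 0.
Definition vscale (c : R) (a : V3) : V3 := mkV (c * v1 a) (c * v2 a) (c * v3 a).
Definition vsub (a b : V3) : V3 := mkV (v1 a - v1 b) (v2 a - v2 b) (v3 a - v3 b).
Definition dot (a b : V3) : R := v1 a * v1 b + v2 a * v2 b + v3 a * v3 b.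
Definition cross (a b : V3) : V3 :=
  mkV (v2 a * v3 b - v3 a * v2 b)
      (v3 a * v1 b - v1 a * v3 b)
      (v1 a * v2 b - v2 a * v1 b).
Definition det3 (a b c : V3) : R := dot a (cross b c).
Definition vnorm (a : V3) : R := sqrt (dot a a).

Definition map_u (h : R -> R -> V3) : R -> R -> V3 :=
  fun x y => mkV (pdu (fun x y => v1 (h x y)) x y)
                 (pdu (fun x y => v2 (h x y)) x y)
                 (pdu (fun x y => v3 (h x y)) x y).

Definition dirD (a b : R -> R -> R) (g : R -> R -> R) : R -> R -> R :=
  fun x y => a x y * pdu g x y + b x y * pdv g x y.

Definition dirDmap (a b : R -> R -> R) (h : R -> R -> V3) : R -> R -> V3 :=
  fun x y => mkV (dirD a b (fun x y => v1 (h x y)) x y)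
                 (dirD a b (fun x y => v2 (h x y)) x y)
                 (dirD a b (fun x y => v3 (h x y)) x y).

Fixpoint etaPow (a b : R -> R -> R) (k : nat) (h : R -> R -> V3) : R -> R -> V3 :=
  match k with
  | O => h
  | S k' => dirDmap a b (etaPow a b k' h)
  end.

(** The vector field eta = a d/du + b d/dv is admissible for h at p = (u0,0)
    (singular set {v = 0}): along {v=0} near p we have eta h = 0,
    <h_u, eta^2 h> = <h_u, eta^3 h> = 0; moreover eta is smooth and, at p,
    is a nonzero null vector pointing in the positive d/dv direction
    (orientation convention fixing the sign of r_c). *)
Definition admissible_field (h : R -> R -> V3) (u0 : R) (a b : R -> R -> R) : Prop :=
  smooth2 a /\ smooth2 b /\ 0 < b u0 0 /\
  exists eps : R, 0 < eps /\
    forall x : R, Rabs (x - u0) < eps ->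
      etaPow a b 1 h x 0 = vzero /\
      dot (map_u h x 0) (etaPow a b 2 h x 0) = 0 /\
      dot (map_u h x 0) (etaPow a b 3 h x 0) = 0.

Definition bias (h : R -> R -> V3) (a b : R -> R -> R) (u0 : R) : R :=
  let hu := map_u h u0 0 in
  let e2 := etaPow a b 2 h u0 0 in
  let e4 := etaPow a b 4 h u0 0 in
  (vnorm hu) ^ 2 * det3 hu e2 e4 / (vnorm (cross hu e2)) ^ 3.

(** secondary cuspidal curvature r_c at p = (u0, 0); |x|^(5/2) = (sqrt |x|)^5 *)
Definition sec_cusp_curv (h : R -> R -> V3) (a b : R -> R -> R) (l u0 : R) : R :=
  let hu := map_u h u0 0 in
  let e2 := etaPow a b 2 h u0 0 in
  let e4 := etaPow a b 4 h u0 0 in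
  let e5 := etaPow a b 5 h u0 0 in
  (sqrt (vnorm hu)) ^ 5 * det3 hu e2 (vsub (vscale 3 e5) (vscale (10 * l) e4))
    / (sqrt (vnorm (cross hu e2))) ^ 7.

Definition c1_of (d1 d2 d3 : R -> R) (d4 : R -> R -> R) : R -> R -> R :=
  fun u s => s + u * s * d1 s + u ^ 2 * d2 s + u ^ 3 * d3 s + u ^ 4 * d4 u s.

Definition f32_of (c0 c1 : R -> R -> R) (c2 c3 : R -> R -> R -> R) : R -> R -> R -> R :=
  fun u v s => c0 u s + v * c1 u s + v ^ 2 * c2 u (v ^ 2) s + v ^ 3 * c3 u (v ^ 2) s.

Definition f_of (f21 f31 : R -> R) (f24 f34 : R -> R -> R) (f32 : R -> R -> R -> R)
  : R -> R -> R -> V3 :=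
  fun u v s =>
    mkV u
        (u ^ 2 * f21 u + v ^ 2 + u * s * f24 u s)
        (u ^ 2 * f31 u + v ^ 2 * f32 u v s + u * s * f34 u s).

(* Main.v *)
Require Import Defs.
From Stdlib Require Import Reals Lra Lia List FunctionalExtensionality.
From Coquelicot Require Import Coquelicot.
Import ListNotations.
Open Scope R_scope.
Arguments pd2 : simpl never.
Arguments pd3 : simpl never.


Module Poly.


Lemma pd2_snoc : forall w g b,
  pd2 (w ++ [b]) g = if b then pdu (pd2 w g) else pdv (pd2 w g).
Proof.
  induction w as [|c w IH]; intros g b.
  - destruct b; reflexivity.
  - destruct c; simpl; unfold pd2; fold pd2; apply IH.
Qed.

Lemma pd3_snoc : forall w g b,
  pd3 (w ++ [b]) g = match b with X1 => pd3_1 (pd3 w g) | X2 => pd3_2 (pd3 w g)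
                       | X3 => pd3_3 (pd3 w g) end.
Proof.
  induction w as [|c w IH]; intros g b.
  - destruct b; reflexivity.
  - destruct c; simpl; unfold pd3; fold pd3; apply IH.
Qed.

Lemma isd_const (r x : R) : is_derive (fun _ : R => r) x 0.
Proof. auto_derive; auto. Qed.
Lemma isd_plus (f g : R -> R) x a b : is_derive f x a -> is_derive g x b ->
  is_derive (fun t => f t + g t) x (a + b).
Proof. intros; apply (is_derive_plus f g); auto. Qed.
Lemma isd_mult (f g : R -> R) x a b : is_derive f x a -> is_derive g x b ->
  is_derive (fun t => f t * g t) x (a * g x + f x * b).
Proof. intros; apply (is_derive_mult f g); auto. intros; apply Rmult_comm. Qed.
Lemma isd_pow (i : nat) x : is_derive (fun t => t ^ i) x (INR i * x ^ (pred i)).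
Proof. apply (is_derive_pow (fun t => t) i x 1 (is_derive_id x)) || (auto_derive; auto; ring). Qed.

Lemma isd_eq (f : R -> R) x a b : is_derive f x a -> a = b -> is_derive f x b.
Proof. intros H E; subst; exact H. Qed.

Definition Good (g : R -> R -> R) : Prop :=
  forall w x y, ex_derive (fun t => pd2 w g t y) x /\ ex_derive (fun t => pd2 w g x t) y.

Lemma smooth2_Good : forall g, smooth2 g -> Good g.
Proof. intros g H w x y. destruct (H w x y) as [A [B _]]. auto. Qed.

Inductive At : Type :=
| AG (k : nat) (w : list bool)
| AF1 (f : R -> R) (n : nat)
| AF2 (g : R -> R -> R) (w : list bool)
| AF3 (c : R -> R -> R -> R) (w : list var3)
| AC (r : R).

Definition Mon : Type := (nat * nat * nat * list At)%type.

Section Eval.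
Variable env : list (R -> R -> R).
Variable s0 : R.

Definition evA (a : At) (x y : R) : R :=
  match a with
  | AG k w => pd2 w (nth k env (fun _ _ => 0)) x y
  | AF1 f n => Derive_n f n x
  | AF2 g w => pd2 w g x s0
  | AF3 c w => pd3 w c x (y * y) s0
  | AC r => r
  end.

Fixpoint prodA (l : list At) (x y : R) : R :=
  match l with [] => 1 | a :: l' => evA a x y * prodA l' x y end.

Definition evM (m : Mon) (x y : R) : R :=
  let '(c, i, j, l) := m in INR c * x ^ i * y ^ j * prodA l x y.

Fixpoint evP (p : list Mon) (x y : R) : R :=
  match p with [] => 0 | m :: p' => evM m x y + evP p' x y end.

Definition WFA (a : At) : Prop :=
  match a with
  | AG k w => Good (nth k env (fun _ _ => 0))
  | AF1 f _ => smooth1 f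
  | AF2 g _ => smooth2 g
  | AF3 c _ => smooth3 c
  | AC _ => True
  end.

Definition WFP (p : list Mon) : Prop := forall m, In m p -> List.Forall WFA (snd m).

End Eval.

Definition dAu (a : At) : option (nat * nat * At) :=
  match a with
  | AG k w => Some (1%nat, 0%nat, AG k (w ++ [true]))
  | AF1 f n => Some (1%nat, 0%nat, AF1 f (S n))
  | AF2 g w => Some (1%nat, 0%nat, AF2 g (w ++ [true]))
  | AF3 c w => Some (1%nat, 0%nat, AF3 c (w ++ [X1]))
  | AC _ => None
  end.

Definition dAv (a : At) : option (nat * nat * At) :=
  match a with
  | AG k w => Some (1%nat, 0%nat, AG k (w ++ [false]))
  | AF1 _ _ => None
  | AF2 _ _ => None
  | AF3 c w => Some (2%nat, 1%nat, AF3 c (w ++ [X2]))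
  | AC _ => None
  end.

Fixpoint dL (d : At -> option (nat * nat * At)) (l : list At) : list (nat * nat * list At) :=
  match l with
  | [] => []
  | a :: l' =>
    (match d a with None => [] | Some (m, dv, a') => [(m, dv, a' :: l')] end)
    ++ map (fun t => let '(m, dv, l'') := t in (m, dv, a :: l'')) (dL d l')
  end.

Definition dMon (d : At -> option (nat * nat * At)) (isU : bool) (m : Mon) : list Mon :=
  let '(c, i, j, l) := m in
  (if isU then match i with O => [] | S i' => [((c * i)%nat, i', j, l)] end
   else match j with O => [] | S j' => [((c * j)%nat, i, j', l)] end)
  ++ map (fun t => let '(mm, dv, l') := t in ((c * mm)%nat, i, (j + dv)%nat, l')) (dL d l).

Definition dPu (p : list Mon) : list Mon := flat_map (dMon dAu true) p.
Definition dPv (p : list Mon) : list Mon := flat_map (dMon dAv false) p.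

Section Sound.
Variable env : list (R -> R -> R).
Variable s0 : R.

Definition dAval (d : At -> option (nat * nat * At)) (a : At) (x y : R) : R :=
  match d a with None => 0 | Some (m, dv, a') => INR m * y ^ dv * evA env s0 a' x y end.

Lemma dAu_ok a x y : WFA env a -> is_derive (fun t => evA env s0 a t y) x (dAval dAu a x y).
Proof.
  destruct a; simpl; intros H; unfold dAval; simpl; rewrite ?Rmult_1_l, ?Rmult_1_r.
  - rewrite pd2_snoc. unfold pdu. apply Derive_correct. apply (H w x y).
  - apply Derive_correct. apply H.
  - rewrite pd2_snoc. unfold pdu. apply Derive_correct. apply (H w x s0).
  - rewrite pd3_snoc. unfold pd3_1. apply Derive_correct. apply (H w x (y*y) s0).
  - apply isd_const.
Qed.

Lemma dAv_ok a x y : WFA env a -> is_derive (fun t => evA env s0 a x t) y (dAval dAv a x y).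
Proof.
  destruct a; simpl; intros H; unfold dAval; simpl; rewrite ?Rmult_1_l, ?Rmult_1_r.
  - rewrite pd2_snoc. unfold pdv. apply Derive_correct. apply (H w x y).
  - apply isd_const.
  - apply isd_const.
  - rewrite pd3_snoc. unfold pd3_2.
    assert (Hd := Derive_correct _ _ (proj1 (proj2 (H w x (y*y) s0)))).
    assert (Hs : is_derive (fun t => t * t) y (2 * y)).
    { replace (2*y) with (1 * y + y * 1) by ring.
      apply (isd_mult (fun t => t) (fun t => t)); apply (is_derive_id (K:=R_AbsRing)). }
    pose proof (is_derive_comp (fun z => pd3 w c x z s0) (fun t => t * t) y _ _ Hd Hs) as Hc.
    eapply is_derive_ext. intro t; reflexivity.
    replace (2 * y * Derive (fun t : R => pd3 w c x t s0) (y * y)) with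
      (scal (2 * y) (Derive (fun z : R => pd3 w c x z s0) (y * y))).
    exact Hc. reflexivity.
  - apply isd_const.
Qed.

Fixpoint sumT (L : list (nat * nat * list At)) (x y : R) : R :=
  match L with
  | [] => 0
  | (m, dv, l) :: L' => INR m * y ^ dv * prodA env s0 l x y + sumT L' x y
  end.

Lemma sumT_app L1 L2 x y : sumT (L1 ++ L2) x y = sumT L1 x y + sumT L2 x y.
Proof. induction L1 as [|[[m dv] l] L1 IH]; simpl; [ring| rewrite IH; ring]. Qed.

Lemma sumT_pre a L x y :
  sumT (map (fun t => let '(m, dv, l'') := t in (m, dv, a :: l'')) L) x y
  = evA env s0 a x y * sumT L x y.
Proof. induction L as [|[[m dv] l] L IH]; simpl; [ring| rewrite IH; ring]. Qed.

Lemma sumT_head d a l x y :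
  sumT (match d a with None => [] | Some (m, dv, a') => [(m, dv, a' :: l)] end) x y
  = dAval d a x y * prodA env s0 l x y.
Proof. unfold dAval. destruct (d a) as [[[m dv] a']|]; simpl; ring. Qed.

Lemma dL_u_ok l x y : List.Forall (WFA env) l ->
  is_derive (fun t => prodA env s0 l t y) x (sumT (dL dAu l) x y).
Proof.
  induction l as [|a l IH]; simpl; intros HF.
  - apply isd_const.
  - inversion HF; subst. rewrite sumT_app, sumT_head, sumT_pre.
    apply (isd_mult (fun t => evA env s0 a t y) (fun t => prodA env s0 l t y)).
    + apply dAu_ok; auto.
    + apply IH; auto.
Qed.

Lemma dL_v_ok l x y : List.Forall (WFA env) l ->
  is_derive (fun t => prodA env s0 l x t) y (sumT (dL dAv l) x y).
Proof.
  induction l as [|a l IH]; simpl; intros HF.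
  - apply isd_const.
  - inversion HF; subst. rewrite sumT_app, sumT_head, sumT_pre.
    apply (isd_mult (fun t => evA env s0 a x t) (fun t => prodA env s0 l x t)).
    + apply dAv_ok; auto.
    + apply IH; auto.
Qed.

Lemma evP_app p q x y : evP env s0 (p ++ q) x y = evP env s0 p x y + evP env s0 q x y.
Proof. induction p; simpl; [ring | rewrite IHp; ring]. Qed.

Lemma evP_mapM c i j L x y :
  evP env s0 (map (fun t => let '(mm, dv, l') := t in ((c * mm)%nat, i, (j + dv)%nat, l')) L) x y
  = INR c * x ^ i * y ^ j * sumT L x y.
Proof.
  induction L as [|[[m dv] l] L IH]; simpl; [ring|]. rewrite IH, mult_INR, pow_add. ring.
Qed.

Lemma dMon_u_ok m x y : List.Forall (WFA env) (snd m) ->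
  is_derive (fun t => evM env s0 m t y) x (evP env s0 (dMon dAu true m) x y).
Proof.
  destruct m as [[[c i] j] l]; simpl; intros HF.
  rewrite evP_app, evP_mapM.
  assert (H1 := dL_u_ok l x y HF).
  assert (Hm := isd_mult (fun _ => INR c) (fun t => t^i) x 0 _ (isd_const (INR c) x) (isd_pow i x)).
  assert (Hm2 := isd_mult _ (fun _ => y^j) x _ 0 Hm (isd_const _ x)).
  assert (HH := isd_mult _ _ x _ _ Hm2 H1). simpl in HH.
  eapply isd_eq. exact HH.
  destruct i; [simpl; ring|]. cbn [evP evM pred]. rewrite mult_INR, S_INR. simpl. ring.
Qed.

Lemma dMon_v_ok m x y : List.Forall (WFA env) (snd m) ->
  is_derive (fun t => evM env s0 m x t) y (evP env s0 (dMon dAv false m) x y).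
Proof.
  destruct m as [[[c i] j] l]; simpl; intros HF.
  rewrite evP_app, evP_mapM.
  assert (H1 := dL_v_ok l x y HF).
  assert (Hm := isd_mult (fun _ => INR c * x ^ i) (fun t => t^j) y 0 _ (isd_const _ y) (isd_pow j y)).
  assert (HH := isd_mult _ _ y _ _ Hm H1). simpl in HH.
  eapply isd_eq. exact HH.
  destruct j; [simpl; ring|]. cbn [evP evM pred]. rewrite mult_INR, S_INR. simpl. ring.
Qed.

Lemma evP_flat (f : Mon -> list Mon) p x y : evP env s0 (flat_map f p) x y = fold_right (fun m acc => evP env s0 (f m) x y + acc) 0 p.
Proof. induction p; simpl; auto. rewrite evP_app, IHp. ring. Qed.

Lemma dPu_ok p x y : WFP env p ->
  is_derive (fun t => evP env s0 p t y) x (evP env s0 (dPu p) x y).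
Proof.
  unfold dPu. induction p as [|m p IH]; simpl; intros HW.
  - apply isd_const.
  - rewrite evP_app. apply (isd_plus (fun t => evM env s0 m t y) (fun t => evP env s0 p t y)).
    + apply dMon_u_ok. apply HW; simpl; auto.
    + apply IH. intros m' Hm'. apply HW; simpl; auto.
Qed.

Lemma dPv_ok p x y : WFP env p ->
  is_derive (fun t => evP env s0 p x t) y (evP env s0 (dPv p) x y).
Proof.
  unfold dPv. induction p as [|m p IH]; simpl; intros HW.
  - apply isd_const.
  - rewrite evP_app. apply (isd_plus (fun t => evM env s0 m x t) (fun t => evP env s0 p x t)).
    + apply dMon_v_ok. apply HW; simpl; auto.
    + apply IH. intros m' Hm'. apply HW; simpl; auto.
Qed.

End Sound.

Lemma dA_WF env d a m dv a' : (d = dAu \/ d = dAv) -> WFA env a -> d a = Some (m, dv, a') -> WFA env a'.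
Proof.
  intros [-> | ->] H E; destruct a; simpl in E; try discriminate; inversion E; subst; simpl in *; auto.
Qed.

Lemma dL_WF env d l : (d = dAu \/ d = dAv) -> List.Forall (WFA env) l ->
  forall t, In t (dL d l) -> List.Forall (WFA env) (snd t).
Proof.
  intros Hd. induction l as [|a l IH]; simpl; intros HF t Ht; [contradiction|].
  inversion HF; subst. apply in_app_or in Ht. destruct Ht as [Ht|Ht].
  - destruct (d a) as [[[m dv] a']|] eqn:E; simpl in Ht; [|contradiction].
    destruct Ht as [<-|[]]. simpl. constructor; auto. eapply dA_WF; eauto.
  - apply in_map_iff in Ht. destruct Ht as [[[m dv] l''] [<- Hin]]. simpl.
    constructor; auto. apply (IH H2 _ Hin).
Qed.

Lemma dMon_WF env d isU m : (d = dAu \/ d = dAv) -> List.Forall (WFA env) (snd m) ->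
  forall m', In m' (dMon d isU m) -> List.Forall (WFA env) (snd m').
Proof.
  destruct m as [[[c i] j] l]; simpl; intros Hd HF m' Hm'.
  apply in_app_or in Hm'. destruct Hm' as [Hm'|Hm'].
  - destruct isU; [destruct i|destruct j]; simpl in Hm'; try contradiction;
      destruct Hm' as [<-|[]]; simpl; auto.
  - apply in_map_iff in Hm'. destruct Hm' as [[[mm dv] l'] [<- Hin]]. simpl.
    apply (dL_WF env d l Hd HF _ Hin).
Qed.

Lemma dPu_WF env p : WFP env p -> WFP env (dPu p).
Proof.
  unfold WFP, dPu. intros H m Hm. apply in_flat_map in Hm. destruct Hm as [m0 [Hm0 Hm]].
  eapply dMon_WF; [left; reflexivity | apply H; exact Hm0 | exact Hm].
Qed.
Lemma dPv_WF env p : WFP env p -> WFP env (dPv p).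
Proof.
  unfold WFP, dPv. intros H m Hm. apply in_flat_map in Hm. destruct Hm as [m0 [Hm0 Hm]].
  eapply dMon_WF; [right; reflexivity | apply H; exact Hm0 | exact Hm].
Qed.

Lemma pdu_evP env s0 p : WFP env p ->
  pdu (fun x y => evP env s0 p x y) = (fun x y => evP env s0 (dPu p) x y).
Proof.
  intros HW. extensionality x; extensionality y. unfold pdu.
  apply is_derive_unique. apply dPu_ok; auto.
Qed.
Lemma pdv_evP env s0 p : WFP env p ->
  pdv (fun x y => evP env s0 p x y) = (fun x y => evP env s0 (dPv p) x y).
Proof.
  intros HW. extensionality x; extensionality y. unfold pdv.
  apply is_derive_unique. apply dPv_ok; auto.
Qed.

Fixpoint dWP (w : list bool) (p : list Mon) : list Mon :=
  match w with
  | [] => p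
  | true :: w' => dWP w' (dPu p)
  | false :: w' => dWP w' (dPv p)
  end.

Lemma pd2_evP env s0 w : forall p, WFP env p ->
  pd2 w (fun x y => evP env s0 p x y) = (fun x y => evP env s0 (dWP w p) x y)
  /\ WFP env (dWP w p).
Proof.
  induction w as [|bb w IH]; intros p HW.
  - split; [reflexivity|exact HW].
  - destruct bb; simpl; unfold pd2; fold pd2.
    + rewrite pdu_evP by auto. apply IH. apply dPu_WF; auto.
    + rewrite pdv_evP by auto. apply IH. apply dPv_WF; auto.
Qed.

Lemma Good_evP env s0 p : WFP env p -> Good (fun x y => evP env s0 p x y).
Proof.
  intros HW w x y. destruct (pd2_evP env s0 w p HW) as [E W]. rewrite E. split.
  - eexists; apply dPu_ok; auto.
  - eexists; apply dPv_ok; auto.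
Qed.

Definition addA (a : At) (m : Mon) : Mon := let '(c, i, j, l) := m in (c, i, j, a :: l).

Lemma evP_addA env s0 a q x y :
  evP env s0 (map (addA a) q) x y = evA env s0 a x y * evP env s0 q x y.
Proof.
  induction q as [|[[[c i] j] l] q IH]; simpl; [ring|]. rewrite IH. ring.
Qed.

Lemma WFP_addA env a q : WFA env a -> WFP env q -> WFP env (map (addA a) q).
Proof.
  unfold WFP. intros Ha Hq m Hm. apply in_map_iff in Hm.
  destruct Hm as [[[[c i] j] l] [<- Hin]]. simpl. constructor; auto.
  apply (Hq _ Hin).
Qed.

Definition etaP (p : list Mon) : list Mon :=
  map (addA (AG 0 [])) (dPu p) ++ map (addA (AG 1 [])) (dPv p).

Fixpoint etaPn (k : nat) (p : list Mon) : list Mon :=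
  match k with O => p | S k' => etaP (etaPn k' p) end.

Lemma etaP_WF env p : Good (nth 0 env (fun _ _ => 0)) -> Good (nth 1 env (fun _ _ => 0)) ->
  WFP env p -> WFP env (etaP p).
Proof.
  intros Ga Gb HW. unfold etaP, WFP. intros m Hm. apply in_app_or in Hm.
  destruct Hm as [Hm|Hm].
  - apply (WFP_addA env (AG 0 []) _ Ga (dPu_WF env p HW)); auto.
  - apply (WFP_addA env (AG 1 []) _ Gb (dPv_WF env p HW)); auto.
Qed.

Lemma etaPn_WF env k p : Good (nth 0 env (fun _ _ => 0)) -> Good (nth 1 env (fun _ _ => 0)) ->
  WFP env p -> WFP env (etaPn k p).
Proof. intros Ga Gb; induction k; simpl; auto. intros; apply etaP_WF; auto. Qed.

Lemma dirD_evP env s0 a b p :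
  nth 0 env (fun _ _ => 0) = a -> nth 1 env (fun _ _ => 0) = b -> WFP env p ->
  dirD a b (fun x y => evP env s0 p x y) = (fun x y => evP env s0 (etaP p) x y).
Proof.
  intros Ea Eb HW. extensionality x; extensionality y. unfold dirD, etaP.
  rewrite evP_app, !evP_addA. simpl. rewrite Ea, Eb.
  rewrite pdu_evP, pdv_evP by auto. reflexivity.
Qed.

Lemma etaPow_evP env s0 a b (h : R -> R -> V3) p1 p2 p3 :
  nth 0 env (fun _ _ => 0) = a -> nth 1 env (fun _ _ => 0) = b ->
  Good a -> Good b -> WFP env p1 -> WFP env p2 -> WFP env p3 ->
  h = (fun x y => mkV (evP env s0 p1 x y) (evP env s0 p2 x y) (evP env s0 p3 x y)) ->
  forall k, etaPow a b k h =
    (fun x y => mkV (evP env s0 (etaPn k p1) x y) (evP env s0 (etaPn k p2) x y)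
                    (evP env s0 (etaPn k p3) x y)).
Proof.
  intros Ea Eb Ga Gb W1 W2 W3 Hh k. induction k.
  - exact Hh.
  - change (etaPow a b (S k) h) with (dirDmap a b (etaPow a b k h)).
    rewrite IHk. extensionality x; extensionality y. unfold dirDmap. simpl etaPn.
    rewrite <- !(dirD_evP env s0 a b) by (auto; apply etaPn_WF; subst; auto).
    reflexivity.
Qed.

Definition filt0 (p : list Mon) : list Mon :=
  filter (fun m => match m with (_, _, O, _) => true | _ => false end) p.

Lemma evP_filt0 env s0 p x : evP env s0 p x 0 = evP env s0 (filt0 p) x 0.
Proof.
  induction p as [|[[[c i] j] l] p IH]; simpl; auto.
  destruct j; simpl; rewrite IH; auto. ring.
Qed.

Definition isAz (a : At) : bool :=
  match a with AG O w => forallb (fun t => t) w | _ => false end.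

Definition filtA (p : list Mon) : list Mon :=
  filter (fun m => negb (existsb isAz (snd m))) p.

Lemma prodA_Az env s0 l x y :
  (forall w, forallb (fun t => t) w = true -> pd2 w (nth 0 env (fun _ _ => 0)) x y = 0) ->
  existsb isAz l = true -> prodA env s0 l x y = 0.
Proof.
  intros Hz. induction l as [|a l IH]; simpl; [discriminate|].
  intros E. apply Bool.orb_true_iff in E. destruct E as [E|E].
  - destruct a; simpl in E; try discriminate. destruct k; try discriminate.
    simpl. rewrite (Hz w E). ring.
  - rewrite IH; auto. ring.
Qed.

Lemma evP_filtA env s0 p x y :
  (forall w, forallb (fun t => t) w = true -> pd2 w (nth 0 env (fun _ _ => 0)) x y = 0) ->
  evP env s0 p x y = evP env s0 (filtA p) x y.
Proof.
  intros Hz. induction p as [|[[[c i] j] l] p IH]; simpl; auto.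
  destruct (existsb isAz l) eqn:E; simpl; rewrite IH; auto.
  rewrite (prodA_Az env s0 l x y Hz E). ring.
Qed.

End Poly.
Import Poly.

Module Jets.

Section Jets.
Variables (f21 f31 d1 d2 d3 : R -> R) (f24 f34 c0 d4 : R -> R -> R)
  (c2 c3 : R -> R -> R -> R) (s0 u0 : R).
Hypotheses (Sf21 : smooth1 f21) (Sf31 : smooth1 f31) (Sf24 : smooth2 f24) (Sf34 : smooth2 f34)
  (Sc0 : smooth2 c0) (Sd4 : smooth2 d4) (Sc2 : smooth3 c2) (Sc3 : smooth3 c3).

Definition H1P : list Mon := [(1%nat,1%nat,0%nat,[])].
Definition H2P : list Mon := [(1%nat,2%nat,0%nat,[AF1 f21 0]); (1%nat,0%nat,2%nat,[]);
   (1%nat,1%nat,0%nat,[AC s0; AF2 f24 []])].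
Definition H3P : list Mon := [(1%nat,2%nat,0%nat,[AF1 f31 0]); (1%nat,0%nat,2%nat,[AF2 c0 []]);
   (1%nat,0%nat,3%nat,[AC s0]); (1%nat,1%nat,3%nat,[AC s0; AC (d1 s0)]);
   (1%nat,2%nat,3%nat,[AC (d2 s0)]); (1%nat,3%nat,3%nat,[AC (d3 s0)]);
   (1%nat,4%nat,3%nat,[AF2 d4 []]); (1%nat,0%nat,4%nat,[AF3 c2 []]);
   (1%nat,0%nat,5%nat,[AF3 c3 []]); (1%nat,1%nat,0%nat,[AC s0; AF2 f34 []])].

Lemma WF_H1 : WFP [] H1P.
Proof. intros m Hm; simpl in Hm; repeat (destruct Hm as [<-|Hm]; [simpl; repeat (apply List.Forall_cons; [simpl; auto|]); apply List.Forall_nil|]); contradiction. Qed.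
Lemma WF_H2 : WFP [] H2P.
Proof. intros m Hm; simpl in Hm; repeat (destruct Hm as [<-|Hm]; [simpl; repeat (apply List.Forall_cons; [simpl; auto|]); apply List.Forall_nil|]); contradiction. Qed.
Lemma WF_H3 : WFP [] H3P.
Proof. intros m Hm; simpl in Hm; repeat (destruct Hm as [<-|Hm]; [simpl; repeat (apply List.Forall_cons; [simpl; auto|]); apply List.Forall_nil|]); contradiction. Qed.

Definition h1f := fun x y => evP [] s0 H1P x y.
Definition h2f := fun x y => evP [] s0 H2P x y.
Definition h3f := fun x y => evP [] s0 H3P x y.
Definition J2 (i j : nat) := evP [] s0 (filt0 (dWP (repeat true i ++ repeat false j) H2P)) u0 0.
Definition J3 (i j : nat) := evP [] s0 (filt0 (dWP (repeat true i ++ repeat false j) H3P)) u0 0.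

Lemma pd2_h1 w : pd2 w h1f = fun x y => evP [] s0 (dWP w H1P) x y. Proof. apply pd2_evP, WF_H1. Qed.
Lemma pd2_h2 w : pd2 w h2f = fun x y => evP [] s0 (dWP w H2P) x y. Proof. apply pd2_evP, WF_H2. Qed.
Lemma pd2_h3 w : pd2 w h3f = fun x y => evP [] s0 (dWP w H3P) x y. Proof. apply pd2_evP, WF_H3. Qed.

Ltac jet_tac := rewrite evP_filt0; cbv [filt0 dWP dPu dPv flat_map dMon dL dAu dAv app map filter
   H1P H2P H3P repeat Nat.mul Nat.add negb]; cbn [evP evM prodA evA INR pow]; ring.


Lemma hw_h1_u : pd2 [true] h1f u0 0 = 1.
Proof. rewrite pd2_h1. jet_tac. Qed.
Lemma hw_h1_uu : pd2 [true;true] h1f u0 0 = 0.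
Proof. rewrite pd2_h1. jet_tac. Qed.
Lemma hw_h1_uuu : pd2 [true;true;true] h1f u0 0 = 0.
Proof. rewrite pd2_h1. jet_tac. Qed.
Lemma hw_h1_uuuu : pd2 [true;true;true;true] h1f u0 0 = 0.
Proof. rewrite pd2_h1. jet_tac. Qed.
Lemma hw_h1_uuuuu : pd2 [true;true;true;true;true] h1f u0 0 = 0.
Proof. rewrite pd2_h1. jet_tac. Qed.
Lemma hw_h1_uuuuv : pd2 [true;true;true;true;false] h1f u0 0 = 0.
Proof. rewrite pd2_h1. jet_tac. Qed.
Lemma hw_h1_uuuv : pd2 [true;true;true;false] h1f u0 0 = 0.
Proof. rewrite pd2_h1. jet_tac. Qed.
Lemma hw_h1_uuuvu : pd2 [true;true;true;false;true] h1f u0 0 = 0.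
Proof. rewrite pd2_h1. jet_tac. Qed.
Lemma hw_h1_uuuvv : pd2 [true;true;true;false;false] h1f u0 0 = 0.
Proof. rewrite pd2_h1. jet_tac. Qed.
Lemma hw_h1_uuv : pd2 [true;true;false] h1f u0 0 = 0.
Proof. rewrite pd2_h1. jet_tac. Qed.
Lemma hw_h1_uuvu : pd2 [true;true;false;true] h1f u0 0 = 0.
Proof. rewrite pd2_h1. jet_tac. Qed.
Lemma hw_h1_uuvuu : pd2 [true;true;false;true;true] h1f u0 0 = 0.
Proof. rewrite pd2_h1. jet_tac. Qed.
Lemma hw_h1_uuvuv : pd2 [true;true;false;true;false] h1f u0 0 = 0.
Proof. rewrite pd2_h1. jet_tac. Qed.
Lemma hw_h1_uuvv : pd2 [true;true;false;false] h1f u0 0 = 0.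
Proof. rewrite pd2_h1. jet_tac. Qed.
Lemma hw_h1_uuvvu : pd2 [true;true;false;false;true] h1f u0 0 = 0.
Proof. rewrite pd2_h1. jet_tac. Qed.
Lemma hw_h1_uuvvv : pd2 [true;true;false;false;false] h1f u0 0 = 0.
Proof. rewrite pd2_h1. jet_tac. Qed.
Lemma hw_h1_uv : pd2 [true;false] h1f u0 0 = 0.
Proof. rewrite pd2_h1. jet_tac. Qed.
Lemma hw_h1_uvu : pd2 [true;false;true] h1f u0 0 = 0.
Proof. rewrite pd2_h1. jet_tac. Qed.
Lemma hw_h1_uvuu : pd2 [true;false;true;true] h1f u0 0 = 0.
Proof. rewrite pd2_h1. jet_tac. Qed.
Lemma hw_h1_uvuuu : pd2 [true;false;true;true;true] h1f u0 0 = 0.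
Proof. rewrite pd2_h1. jet_tac. Qed.
Lemma hw_h1_uvuuv : pd2 [true;false;true;true;false] h1f u0 0 = 0.
Proof. rewrite pd2_h1. jet_tac. Qed.
Lemma hw_h1_uvuv : pd2 [true;false;true;false] h1f u0 0 = 0.
Proof. rewrite pd2_h1. jet_tac. Qed.
Lemma hw_h1_uvuvu : pd2 [true;false;true;false;true] h1f u0 0 = 0.
Proof. rewrite pd2_h1. jet_tac. Qed.
Lemma hw_h1_uvuvv : pd2 [true;false;true;false;false] h1f u0 0 = 0.
Proof. rewrite pd2_h1. jet_tac. Qed.
Lemma hw_h1_uvv : pd2 [true;false;false] h1f u0 0 = 0.
Proof. rewrite pd2_h1. jet_tac. Qed.
Lemma hw_h1_uvvu : pd2 [true;false;false;true] h1f u0 0 = 0.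
Proof. rewrite pd2_h1. jet_tac. Qed.
Lemma hw_h1_uvvuu : pd2 [true;false;false;true;true] h1f u0 0 = 0.
Proof. rewrite pd2_h1. jet_tac. Qed.
Lemma hw_h1_uvvuv : pd2 [true;false;false;true;false] h1f u0 0 = 0.
Proof. rewrite pd2_h1. jet_tac. Qed.
Lemma hw_h1_uvvv : pd2 [true;false;false;false] h1f u0 0 = 0.
Proof. rewrite pd2_h1. jet_tac. Qed.
Lemma hw_h1_uvvvu : pd2 [true;false;false;false;true] h1f u0 0 = 0.
Proof. rewrite pd2_h1. jet_tac. Qed.
Lemma hw_h1_uvvvv : pd2 [true;false;false;false;false] h1f u0 0 = 0.
Proof. rewrite pd2_h1. jet_tac. Qed.
Lemma hw_h1_v : pd2 [false] h1f u0 0 = 0.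
Proof. rewrite pd2_h1. jet_tac. Qed.
Lemma hw_h1_vu : pd2 [false;true] h1f u0 0 = 0.
Proof. rewrite pd2_h1. jet_tac. Qed.
Lemma hw_h1_vuu : pd2 [false;true;true] h1f u0 0 = 0.
Proof. rewrite pd2_h1. jet_tac. Qed.
Lemma hw_h1_vuuu : pd2 [false;true;true;true] h1f u0 0 = 0.
Proof. rewrite pd2_h1. jet_tac. Qed.
Lemma hw_h1_vuuuu : pd2 [false;true;true;true;true] h1f u0 0 = 0.
Proof. rewrite pd2_h1. jet_tac. Qed.
Lemma hw_h1_vuuuv : pd2 [false;true;true;true;false] h1f u0 0 = 0.
Proof. rewrite pd2_h1. jet_tac. Qed.
Lemma hw_h1_vuuv : pd2 [false;true;true;false] h1f u0 0 = 0.
Proof. rewrite pd2_h1. jet_tac. Qed.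
Lemma hw_h1_vuuvu : pd2 [false;true;true;false;true] h1f u0 0 = 0.
Proof. rewrite pd2_h1. jet_tac. Qed.
Lemma hw_h1_vuuvv : pd2 [false;true;true;false;false] h1f u0 0 = 0.
Proof. rewrite pd2_h1. jet_tac. Qed.
Lemma hw_h1_vuv : pd2 [false;true;false] h1f u0 0 = 0.
Proof. rewrite pd2_h1. jet_tac. Qed.
Lemma hw_h1_vuvu : pd2 [false;true;false;true] h1f u0 0 = 0.
Proof. rewrite pd2_h1. jet_tac. Qed.
Lemma hw_h1_vuvuu : pd2 [false;true;false;true;true] h1f u0 0 = 0.
Proof. rewrite pd2_h1. jet_tac. Qed.
Lemma hw_h1_vuvuv : pd2 [false;true;false;true;false] h1f u0 0 = 0.
Proof. rewrite pd2_h1. jet_tac. Qed.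
Lemma hw_h1_vuvv : pd2 [false;true;false;false] h1f u0 0 = 0.
Proof. rewrite pd2_h1. jet_tac. Qed.
Lemma hw_h1_vuvvu : pd2 [false;true;false;false;true] h1f u0 0 = 0.
Proof. rewrite pd2_h1. jet_tac. Qed.
Lemma hw_h1_vuvvv : pd2 [false;true;false;false;false] h1f u0 0 = 0.
Proof. rewrite pd2_h1. jet_tac. Qed.
Lemma hw_h1_vv : pd2 [false;false] h1f u0 0 = 0.
Proof. rewrite pd2_h1. jet_tac. Qed.
Lemma hw_h1_vvu : pd2 [false;false;true] h1f u0 0 = 0.
Proof. rewrite pd2_h1. jet_tac. Qed.
Lemma hw_h1_vvuu : pd2 [false;false;true;true] h1f u0 0 = 0.
Proof. rewrite pd2_h1. jet_tac. Qed.
Lemma hw_h1_vvuuu : pd2 [false;false;true;true;true] h1f u0 0 = 0.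
Proof. rewrite pd2_h1. jet_tac. Qed.
Lemma hw_h1_vvuuv : pd2 [false;false;true;true;false] h1f u0 0 = 0.
Proof. rewrite pd2_h1. jet_tac. Qed.
Lemma hw_h1_vvuv : pd2 [false;false;true;false] h1f u0 0 = 0.
Proof. rewrite pd2_h1. jet_tac. Qed.
Lemma hw_h1_vvuvu : pd2 [false;false;true;false;true] h1f u0 0 = 0.
Proof. rewrite pd2_h1. jet_tac. Qed.
Lemma hw_h1_vvuvv : pd2 [false;false;true;false;false] h1f u0 0 = 0.
Proof. rewrite pd2_h1. jet_tac. Qed.
Lemma hw_h1_vvv : pd2 [false;false;false] h1f u0 0 = 0.
Proof. rewrite pd2_h1. jet_tac. Qed.
Lemma hw_h1_vvvu : pd2 [false;false;false;true] h1f u0 0 = 0.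
Proof. rewrite pd2_h1. jet_tac. Qed.
Lemma hw_h1_vvvuu : pd2 [false;false;false;true;true] h1f u0 0 = 0.
Proof. rewrite pd2_h1. jet_tac. Qed.
Lemma hw_h1_vvvuv : pd2 [false;false;false;true;false] h1f u0 0 = 0.
Proof. rewrite pd2_h1. jet_tac. Qed.
Lemma hw_h1_vvvv : pd2 [false;false;false;false] h1f u0 0 = 0.
Proof. rewrite pd2_h1. jet_tac. Qed.
Lemma hw_h1_vvvvu : pd2 [false;false;false;false;true] h1f u0 0 = 0.
Proof. rewrite pd2_h1. jet_tac. Qed.
Lemma hw_h1_vvvvv : pd2 [false;false;false;false;false] h1f u0 0 = 0.
Proof. rewrite pd2_h1. jet_tac. Qed.
Lemma hw_h2_u : pd2 [true] h2f u0 0 = J2 1 0.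
Proof. rewrite pd2_h2. unfold J2; jet_tac. Qed.
Lemma hw_h2_uu : pd2 [true;true] h2f u0 0 = J2 2 0.
Proof. rewrite pd2_h2. unfold J2; jet_tac. Qed.
Lemma hw_h2_uuu : pd2 [true;true;true] h2f u0 0 = J2 3 0.
Proof. rewrite pd2_h2. unfold J2; jet_tac. Qed.
Lemma hw_h2_uuuu : pd2 [true;true;true;true] h2f u0 0 = J2 4 0.
Proof. rewrite pd2_h2. unfold J2; jet_tac. Qed.
Lemma hw_h2_uuuuu : pd2 [true;true;true;true;true] h2f u0 0 = J2 5 0.
Proof. rewrite pd2_h2. unfold J2; jet_tac. Qed.
Lemma hw_h2_uuuuv : pd2 [true;true;true;true;false] h2f u0 0 = 0.
Proof. rewrite pd2_h2. jet_tac. Qed.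
Lemma hw_h2_uuuv : pd2 [true;true;true;false] h2f u0 0 = 0.
Proof. rewrite pd2_h2. jet_tac. Qed.
Lemma hw_h2_uuuvu : pd2 [true;true;true;false;true] h2f u0 0 = 0.
Proof. rewrite pd2_h2. jet_tac. Qed.
Lemma hw_h2_uuuvv : pd2 [true;true;true;false;false] h2f u0 0 = 0.
Proof. rewrite pd2_h2. jet_tac. Qed.
Lemma hw_h2_uuv : pd2 [true;true;false] h2f u0 0 = 0.
Proof. rewrite pd2_h2. jet_tac. Qed.
Lemma hw_h2_uuvu : pd2 [true;true;false;true] h2f u0 0 = 0.
Proof. rewrite pd2_h2. jet_tac. Qed.
Lemma hw_h2_uuvuu : pd2 [true;true;false;true;true] h2f u0 0 = 0.
Proof. rewrite pd2_h2. jet_tac. Qed.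
Lemma hw_h2_uuvuv : pd2 [true;true;false;true;false] h2f u0 0 = 0.
Proof. rewrite pd2_h2. jet_tac. Qed.
Lemma hw_h2_uuvv : pd2 [true;true;false;false] h2f u0 0 = 0.
Proof. rewrite pd2_h2. jet_tac. Qed.
Lemma hw_h2_uuvvu : pd2 [true;true;false;false;true] h2f u0 0 = 0.
Proof. rewrite pd2_h2. jet_tac. Qed.
Lemma hw_h2_uuvvv : pd2 [true;true;false;false;false] h2f u0 0 = 0.
Proof. rewrite pd2_h2. jet_tac. Qed.
Lemma hw_h2_uv : pd2 [true;false] h2f u0 0 = 0.
Proof. rewrite pd2_h2. jet_tac. Qed.
Lemma hw_h2_uvu : pd2 [true;false;true] h2f u0 0 = 0.
Proof. rewrite pd2_h2. jet_tac. Qed.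
Lemma hw_h2_uvuu : pd2 [true;false;true;true] h2f u0 0 = 0.
Proof. rewrite pd2_h2. jet_tac. Qed.
Lemma hw_h2_uvuuu : pd2 [true;false;true;true;true] h2f u0 0 = 0.
Proof. rewrite pd2_h2. jet_tac. Qed.
Lemma hw_h2_uvuuv : pd2 [true;false;true;true;false] h2f u0 0 = 0.
Proof. rewrite pd2_h2. jet_tac. Qed.
Lemma hw_h2_uvuv : pd2 [true;false;true;false] h2f u0 0 = 0.
Proof. rewrite pd2_h2. jet_tac. Qed.
Lemma hw_h2_uvuvu : pd2 [true;false;true;false;true] h2f u0 0 = 0.
Proof. rewrite pd2_h2. jet_tac. Qed.
Lemma hw_h2_uvuvv : pd2 [true;false;true;false;false] h2f u0 0 = 0.
Proof. rewrite pd2_h2. jet_tac. Qed.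
Lemma hw_h2_uvv : pd2 [true;false;false] h2f u0 0 = 0.
Proof. rewrite pd2_h2. jet_tac. Qed.
Lemma hw_h2_uvvu : pd2 [true;false;false;true] h2f u0 0 = 0.
Proof. rewrite pd2_h2. jet_tac. Qed.
Lemma hw_h2_uvvuu : pd2 [true;false;false;true;true] h2f u0 0 = 0.
Proof. rewrite pd2_h2. jet_tac. Qed.
Lemma hw_h2_uvvuv : pd2 [true;false;false;true;false] h2f u0 0 = 0.
Proof. rewrite pd2_h2. jet_tac. Qed.
Lemma hw_h2_uvvv : pd2 [true;false;false;false] h2f u0 0 = 0.
Proof. rewrite pd2_h2. jet_tac. Qed.
Lemma hw_h2_uvvvu : pd2 [true;false;false;false;true] h2f u0 0 = 0.
Proof. rewrite pd2_h2. jet_tac. Qed.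
Lemma hw_h2_uvvvv : pd2 [true;false;false;false;false] h2f u0 0 = 0.
Proof. rewrite pd2_h2. jet_tac. Qed.
Lemma hw_h2_v : pd2 [false] h2f u0 0 = 0.
Proof. rewrite pd2_h2. jet_tac. Qed.
Lemma hw_h2_vu : pd2 [false;true] h2f u0 0 = 0.
Proof. rewrite pd2_h2. jet_tac. Qed.
Lemma hw_h2_vuu : pd2 [false;true;true] h2f u0 0 = 0.
Proof. rewrite pd2_h2. jet_tac. Qed.
Lemma hw_h2_vuuu : pd2 [false;true;true;true] h2f u0 0 = 0.
Proof. rewrite pd2_h2. jet_tac. Qed.
Lemma hw_h2_vuuuu : pd2 [false;true;true;true;true] h2f u0 0 = 0.
Proof. rewrite pd2_h2. jet_tac. Qed.
Lemma hw_h2_vuuuv : pd2 [false;true;true;true;false] h2f u0 0 = 0.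
Proof. rewrite pd2_h2. jet_tac. Qed.
Lemma hw_h2_vuuv : pd2 [false;true;true;false] h2f u0 0 = 0.
Proof. rewrite pd2_h2. jet_tac. Qed.
Lemma hw_h2_vuuvu : pd2 [false;true;true;false;true] h2f u0 0 = 0.
Proof. rewrite pd2_h2. jet_tac. Qed.
Lemma hw_h2_vuuvv : pd2 [false;true;true;false;false] h2f u0 0 = 0.
Proof. rewrite pd2_h2. jet_tac. Qed.
Lemma hw_h2_vuv : pd2 [false;true;false] h2f u0 0 = 0.
Proof. rewrite pd2_h2. jet_tac. Qed.
Lemma hw_h2_vuvu : pd2 [false;true;false;true] h2f u0 0 = 0.
Proof. rewrite pd2_h2. jet_tac. Qed.
Lemma hw_h2_vuvuu : pd2 [false;true;false;true;true] h2f u0 0 = 0.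
Proof. rewrite pd2_h2. jet_tac. Qed.
Lemma hw_h2_vuvuv : pd2 [false;true;false;true;false] h2f u0 0 = 0.
Proof. rewrite pd2_h2. jet_tac. Qed.
Lemma hw_h2_vuvv : pd2 [false;true;false;false] h2f u0 0 = 0.
Proof. rewrite pd2_h2. jet_tac. Qed.
Lemma hw_h2_vuvvu : pd2 [false;true;false;false;true] h2f u0 0 = 0.
Proof. rewrite pd2_h2. jet_tac. Qed.
Lemma hw_h2_vuvvv : pd2 [false;true;false;false;false] h2f u0 0 = 0.
Proof. rewrite pd2_h2. jet_tac. Qed.
Lemma hw_h2_vv : pd2 [false;false] h2f u0 0 = 2.
Proof. rewrite pd2_h2. jet_tac. Qed.
Lemma hw_h2_vvu : pd2 [false;false;true] h2f u0 0 = 0.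
Proof. rewrite pd2_h2. jet_tac. Qed.
Lemma hw_h2_vvuu : pd2 [false;false;true;true] h2f u0 0 = 0.
Proof. rewrite pd2_h2. jet_tac. Qed.
Lemma hw_h2_vvuuu : pd2 [false;false;true;true;true] h2f u0 0 = 0.
Proof. rewrite pd2_h2. jet_tac. Qed.
Lemma hw_h2_vvuuv : pd2 [false;false;true;true;false] h2f u0 0 = 0.
Proof. rewrite pd2_h2. jet_tac. Qed.
Lemma hw_h2_vvuv : pd2 [false;false;true;false] h2f u0 0 = 0.
Proof. rewrite pd2_h2. jet_tac. Qed.
Lemma hw_h2_vvuvu : pd2 [false;false;true;false;true] h2f u0 0 = 0.
Proof. rewrite pd2_h2. jet_tac. Qed.
Lemma hw_h2_vvuvv : pd2 [false;false;true;false;false] h2f u0 0 = 0.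
Proof. rewrite pd2_h2. jet_tac. Qed.
Lemma hw_h2_vvv : pd2 [false;false;false] h2f u0 0 = 0.
Proof. rewrite pd2_h2. jet_tac. Qed.
Lemma hw_h2_vvvu : pd2 [false;false;false;true] h2f u0 0 = 0.
Proof. rewrite pd2_h2. jet_tac. Qed.
Lemma hw_h2_vvvuu : pd2 [false;false;false;true;true] h2f u0 0 = 0.
Proof. rewrite pd2_h2. jet_tac. Qed.
Lemma hw_h2_vvvuv : pd2 [false;false;false;true;false] h2f u0 0 = 0.
Proof. rewrite pd2_h2. jet_tac. Qed.
Lemma hw_h2_vvvv : pd2 [false;false;false;false] h2f u0 0 = 0.
Proof. rewrite pd2_h2. jet_tac. Qed.
Lemma hw_h2_vvvvu : pd2 [false;false;false;false;true] h2f u0 0 = 0.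
Proof. rewrite pd2_h2. jet_tac. Qed.
Lemma hw_h2_vvvvv : pd2 [false;false;false;false;false] h2f u0 0 = 0.
Proof. rewrite pd2_h2. jet_tac. Qed.
Lemma hw_h3_u : pd2 [true] h3f u0 0 = J3 1 0.
Proof. rewrite pd2_h3. unfold J3; jet_tac. Qed.
Lemma hw_h3_uu : pd2 [true;true] h3f u0 0 = J3 2 0.
Proof. rewrite pd2_h3. unfold J3; jet_tac. Qed.
Lemma hw_h3_uuu : pd2 [true;true;true] h3f u0 0 = J3 3 0.
Proof. rewrite pd2_h3. unfold J3; jet_tac. Qed.
Lemma hw_h3_uuuu : pd2 [true;true;true;true] h3f u0 0 = J3 4 0.
Proof. rewrite pd2_h3. unfold J3; jet_tac. Qed.
Lemma hw_h3_uuuuu : pd2 [true;true;true;true;true] h3f u0 0 = J3 5 0.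
Proof. rewrite pd2_h3. unfold J3; jet_tac. Qed.
Lemma hw_h3_uuuuv : pd2 [true;true;true;true;false] h3f u0 0 = 0.
Proof. rewrite pd2_h3. jet_tac. Qed.
Lemma hw_h3_uuuv : pd2 [true;true;true;false] h3f u0 0 = 0.
Proof. rewrite pd2_h3. jet_tac. Qed.
Lemma hw_h3_uuuvu : pd2 [true;true;true;false;true] h3f u0 0 = 0.
Proof. rewrite pd2_h3. jet_tac. Qed.
Lemma hw_h3_uuuvv : pd2 [true;true;true;false;false] h3f u0 0 = J3 3 2.
Proof. rewrite pd2_h3. unfold J3; jet_tac. Qed.
Lemma hw_h3_uuv : pd2 [true;true;false] h3f u0 0 = 0.
Proof. rewrite pd2_h3. jet_tac. Qed.
Lemma hw_h3_uuvu : pd2 [true;true;false;true] h3f u0 0 = 0.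
Proof. rewrite pd2_h3. jet_tac. Qed.
Lemma hw_h3_uuvuu : pd2 [true;true;false;true;true] h3f u0 0 = 0.
Proof. rewrite pd2_h3. jet_tac. Qed.
Lemma hw_h3_uuvuv : pd2 [true;true;false;true;false] h3f u0 0 = J3 3 2.
Proof. rewrite pd2_h3. unfold J3; jet_tac. Qed.
Lemma hw_h3_uuvv : pd2 [true;true;false;false] h3f u0 0 = J3 2 2.
Proof. rewrite pd2_h3. unfold J3; jet_tac. Qed.
Lemma hw_h3_uuvvu : pd2 [true;true;false;false;true] h3f u0 0 = J3 3 2.
Proof. rewrite pd2_h3. unfold J3; jet_tac. Qed.
Lemma hw_h3_uuvvv : pd2 [true;true;false;false;false] h3f u0 0 = J3 2 3.
Proof. rewrite pd2_h3. unfold J3; jet_tac. Qed.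
Lemma hw_h3_uv : pd2 [true;false] h3f u0 0 = 0.
Proof. rewrite pd2_h3. jet_tac. Qed.
Lemma hw_h3_uvu : pd2 [true;false;true] h3f u0 0 = 0.
Proof. rewrite pd2_h3. jet_tac. Qed.
Lemma hw_h3_uvuu : pd2 [true;false;true;true] h3f u0 0 = 0.
Proof. rewrite pd2_h3. jet_tac. Qed.
Lemma hw_h3_uvuuu : pd2 [true;false;true;true;true] h3f u0 0 = 0.
Proof. rewrite pd2_h3. jet_tac. Qed.
Lemma hw_h3_uvuuv : pd2 [true;false;true;true;false] h3f u0 0 = J3 3 2.
Proof. rewrite pd2_h3. unfold J3; jet_tac. Qed.
Lemma hw_h3_uvuv : pd2 [true;false;true;false] h3f u0 0 = J3 2 2.
Proof. rewrite pd2_h3. unfold J3; jet_tac. Qed.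
Lemma hw_h3_uvuvu : pd2 [true;false;true;false;true] h3f u0 0 = J3 3 2.
Proof. rewrite pd2_h3. unfold J3; jet_tac. Qed.
Lemma hw_h3_uvuvv : pd2 [true;false;true;false;false] h3f u0 0 = J3 2 3.
Proof. rewrite pd2_h3. unfold J3; jet_tac. Qed.
Lemma hw_h3_uvv : pd2 [true;false;false] h3f u0 0 = J3 1 2.
Proof. rewrite pd2_h3. unfold J3; jet_tac. Qed.
Lemma hw_h3_uvvu : pd2 [true;false;false;true] h3f u0 0 = J3 2 2.
Proof. rewrite pd2_h3. unfold J3; jet_tac. Qed.
Lemma hw_h3_uvvuu : pd2 [true;false;false;true;true] h3f u0 0 = J3 3 2.
Proof. rewrite pd2_h3. unfold J3; jet_tac. Qed.
Lemma hw_h3_uvvuv : pd2 [true;false;false;true;false] h3f u0 0 = J3 2 3.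
Proof. rewrite pd2_h3. unfold J3; jet_tac. Qed.
Lemma hw_h3_uvvv : pd2 [true;false;false;false] h3f u0 0 = J3 1 3.
Proof. rewrite pd2_h3. unfold J3; jet_tac. Qed.
Lemma hw_h3_uvvvu : pd2 [true;false;false;false;true] h3f u0 0 = J3 2 3.
Proof. rewrite pd2_h3. unfold J3; jet_tac. Qed.
Lemma hw_h3_uvvvv : pd2 [true;false;false;false;false] h3f u0 0 = J3 1 4.
Proof. rewrite pd2_h3. unfold J3; jet_tac. Qed.
Lemma hw_h3_v : pd2 [false] h3f u0 0 = 0.
Proof. rewrite pd2_h3. jet_tac. Qed.
Lemma hw_h3_vu : pd2 [false;true] h3f u0 0 = 0.
Proof. rewrite pd2_h3. jet_tac. Qed.
Lemma hw_h3_vuu : pd2 [false;true;true] h3f u0 0 = 0.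
Proof. rewrite pd2_h3. jet_tac. Qed.
Lemma hw_h3_vuuu : pd2 [false;true;true;true] h3f u0 0 = 0.
Proof. rewrite pd2_h3. jet_tac. Qed.
Lemma hw_h3_vuuuu : pd2 [false;true;true;true;true] h3f u0 0 = 0.
Proof. rewrite pd2_h3. jet_tac. Qed.
Lemma hw_h3_vuuuv : pd2 [false;true;true;true;false] h3f u0 0 = J3 3 2.
Proof. rewrite pd2_h3. unfold J3; jet_tac. Qed.
Lemma hw_h3_vuuv : pd2 [false;true;true;false] h3f u0 0 = J3 2 2.
Proof. rewrite pd2_h3. unfold J3; jet_tac. Qed.
Lemma hw_h3_vuuvu : pd2 [false;true;true;false;true] h3f u0 0 = J3 3 2.
Proof. rewrite pd2_h3. unfold J3; jet_tac. Qed.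
Lemma hw_h3_vuuvv : pd2 [false;true;true;false;false] h3f u0 0 = J3 2 3.
Proof. rewrite pd2_h3. unfold J3; jet_tac. Qed.
Lemma hw_h3_vuv : pd2 [false;true;false] h3f u0 0 = J3 1 2.
Proof. rewrite pd2_h3. unfold J3; jet_tac. Qed.
Lemma hw_h3_vuvu : pd2 [false;true;false;true] h3f u0 0 = J3 2 2.
Proof. rewrite pd2_h3. unfold J3; jet_tac. Qed.
Lemma hw_h3_vuvuu : pd2 [false;true;false;true;true] h3f u0 0 = J3 3 2.
Proof. rewrite pd2_h3. unfold J3; jet_tac. Qed.
Lemma hw_h3_vuvuv : pd2 [false;true;false;true;false] h3f u0 0 = J3 2 3.
Proof. rewrite pd2_h3. unfold J3; jet_tac. Qed.
Lemma hw_h3_vuvv : pd2 [false;true;false;false] h3f u0 0 = J3 1 3.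
Proof. rewrite pd2_h3. unfold J3; jet_tac. Qed.
Lemma hw_h3_vuvvu : pd2 [false;true;false;false;true] h3f u0 0 = J3 2 3.
Proof. rewrite pd2_h3. unfold J3; jet_tac. Qed.
Lemma hw_h3_vuvvv : pd2 [false;true;false;false;false] h3f u0 0 = J3 1 4.
Proof. rewrite pd2_h3. unfold J3; jet_tac. Qed.
Lemma hw_h3_vv : pd2 [false;false] h3f u0 0 = J3 0 2.
Proof. rewrite pd2_h3. unfold J3; jet_tac. Qed.
Lemma hw_h3_vvu : pd2 [false;false;true] h3f u0 0 = J3 1 2.
Proof. rewrite pd2_h3. unfold J3; jet_tac. Qed.
Lemma hw_h3_vvuu : pd2 [false;false;true;true] h3f u0 0 = J3 2 2.
Proof. rewrite pd2_h3. unfold J3; jet_tac. Qed.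
Lemma hw_h3_vvuuu : pd2 [false;false;true;true;true] h3f u0 0 = J3 3 2.
Proof. rewrite pd2_h3. unfold J3; jet_tac. Qed.
Lemma hw_h3_vvuuv : pd2 [false;false;true;true;false] h3f u0 0 = J3 2 3.
Proof. rewrite pd2_h3. unfold J3; jet_tac. Qed.
Lemma hw_h3_vvuv : pd2 [false;false;true;false] h3f u0 0 = J3 1 3.
Proof. rewrite pd2_h3. unfold J3; jet_tac. Qed.
Lemma hw_h3_vvuvu : pd2 [false;false;true;false;true] h3f u0 0 = J3 2 3.
Proof. rewrite pd2_h3. unfold J3; jet_tac. Qed.
Lemma hw_h3_vvuvv : pd2 [false;false;true;false;false] h3f u0 0 = J3 1 4.
Proof. rewrite pd2_h3. unfold J3; jet_tac. Qed.
Lemma hw_h3_vvv : pd2 [false;false;false] h3f u0 0 = J3 0 3.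
Proof. rewrite pd2_h3. unfold J3; jet_tac. Qed.
Lemma hw_h3_vvvu : pd2 [false;false;false;true] h3f u0 0 = J3 1 3.
Proof. rewrite pd2_h3. unfold J3; jet_tac. Qed.
Lemma hw_h3_vvvuu : pd2 [false;false;false;true;true] h3f u0 0 = J3 2 3.
Proof. rewrite pd2_h3. unfold J3; jet_tac. Qed.
Lemma hw_h3_vvvuv : pd2 [false;false;false;true;false] h3f u0 0 = J3 1 4.
Proof. rewrite pd2_h3. unfold J3; jet_tac. Qed.
Lemma hw_h3_vvvv : pd2 [false;false;false;false] h3f u0 0 = J3 0 4.
Proof. rewrite pd2_h3. unfold J3; jet_tac. Qed.
Lemma hw_h3_vvvvu : pd2 [false;false;false;false;true] h3f u0 0 = J3 1 4.
Proof. rewrite pd2_h3. unfold J3; jet_tac. Qed.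
Lemma hw_h3_vvvvv : pd2 [false;false;false;false;false] h3f u0 0 = J3 0 5.
Proof. rewrite pd2_h3. unfold J3; jet_tac. Qed.

Ltac jx_tac := cbv [filt0 dWP dPu dPv flat_map dMon dL dAu dAv app map filter
   H1P H2P H3P repeat Nat.mul Nat.add negb]; cbn [evP evM prodA evA INR pow]; ring.

Lemma J2_10 : J2 1 0 = 2*u0*Derive_n f21 0 u0 + u0^2*Derive_n f21 1 u0 + s0*pd2 [] f24 u0 s0 + u0*s0*pd2 [true] f24 u0 s0.
Proof. unfold J2. jx_tac. Qed.
Lemma J2_20 : J2 2 0 = 2*Derive_n f21 0 u0 + 4*u0*Derive_n f21 1 u0 + u0^2*Derive_n f21 2 u0 + 2*s0*pd2 [true] f24 u0 s0 + u0*s0*pd2 [true;true] f24 u0 s0.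
Proof. unfold J2. jx_tac. Qed.
Lemma J3_10 : J3 1 0 = 2*u0*Derive_n f31 0 u0 + u0^2*Derive_n f31 1 u0 + s0*pd2 [] f34 u0 s0 + u0*s0*pd2 [true] f34 u0 s0.
Proof. unfold J3. jx_tac. Qed.
Lemma J3_20 : J3 2 0 = 2*Derive_n f31 0 u0 + 4*u0*Derive_n f31 1 u0 + u0^2*Derive_n f31 2 u0 + 2*s0*pd2 [true] f34 u0 s0 + u0*s0*pd2 [true;true] f34 u0 s0.
Proof. unfold J3. jx_tac. Qed.
Lemma J3_02 : J3 0 2 = 2*pd2 [] c0 u0 s0.
Proof. unfold J3. jx_tac. Qed.
Lemma J3_12 : J3 1 2 = 2*pd2 [true] c0 u0 s0.
Proof. unfold J3. jx_tac. Qed.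
Lemma J3_03 : J3 0 3 = 6*(s0 + u0*s0*d1 s0 + u0^2*d2 s0 + u0^3*d3 s0 + u0^4*pd2 [] d4 u0 s0).
Proof. unfold J3. jx_tac. Qed.
Lemma J3_13 : J3 1 3 = 6*(s0*d1 s0 + 2*u0*d2 s0 + 3*u0^2*d3 s0 + 4*u0^3*pd2 [] d4 u0 s0 + u0^4*pd2 [true] d4 u0 s0).
Proof. unfold J3. jx_tac. Qed.
Lemma J3_04 : J3 0 4 = 24*pd3 [] c2 u0 0 s0.
Proof. unfold J3. cbv [filt0 dWP dPu dPv flat_map dMon dL dAu dAv app map filter
   H1P H2P H3P repeat Nat.mul Nat.add negb]; cbn [evP evM prodA evA INR pow]. rewrite ?(Rmult_0_l 0). ring. Qed.
Lemma J3_05 : J3 0 5 = 120*pd3 [] c3 u0 0 s0.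
Proof. unfold J3. cbv [filt0 dWP dPu dPv flat_map dMon dL dAu dAv app map filter
   H1P H2P H3P repeat Nat.mul Nat.add negb]; cbn [evP evM prodA evA INR pow]. rewrite ?(Rmult_0_l 0). ring. Qed.
End Jets.

End Jets.
Import Jets.

Module Eta.

Section Eta.
Variables (f21 f31 d1 d2 d3 : R -> R) (f24 f34 c0 d4 : R -> R -> R)
  (c2 c3 : R -> R -> R -> R) (s0 u0 : R) (a b : R -> R -> R).
Hypotheses (Sf21 : smooth1 f21) (Sf31 : smooth1 f31) (Sf24 : smooth2 f24) (Sf34 : smooth2 f34)
  (Sc0 : smooth2 c0) (Sd4 : smooth2 d4) (Sc2 : smooth3 c2) (Sc3 : smooth3 c3).
Hypothesis Hz : forall w, forallb (fun t => t) w = true -> pd2 w a u0 0 = 0.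

Definition envE := [a; b; h1f s0; h2f f21 f24 s0; h3f f31 d1 d2 d3 f34 c0 d4 c2 c3 s0].
Definition A (w : list bool) := pd2 w a u0 0.
Definition B (w : list bool) := pd2 w b u0 0.
Let J2 := J2 f21 f24 s0 u0.
Let J3 := J3 f31 d1 d2 d3 f34 c0 d4 c2 c3 s0 u0.

Ltac eta_pre := unfold A, B, J2, J3;
  rewrite (evP_filtA envE s0 _ u0 0 Hz);
  cbv [etaPn etaP filtA dPu dPv flat_map dMon dL dAu dAv app map filter addA isAz existsb forallb
       Nat.mul Nat.add negb orb andb snd]; cbn [evP evM prodA evA INR pow nth envE].

Lemma E_h1_2 : evP envE s0 (etaPn 2 [(1%nat,0%nat,0%nat,[AG 2 []])]) u0 0 = 1*(A [false])*(B []).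
Proof. eta_pre; rewrite ?hw_h1_u by assumption; rewrite ?hw_h1_v by assumption; rewrite ?hw_h1_vv by assumption; ring. Qed.

Lemma E_h1_3 : evP envE s0 (etaPn 3 [(1%nat,0%nat,0%nat,[AG 2 []])]) u0 0 = 1*(A [false;false])*(B [])*(B []) + 1*(A [false])*(B [])*(B [false]).
Proof. eta_pre; rewrite ?hw_h1_u by assumption; rewrite ?hw_h1_uv by assumption; rewrite ?hw_h1_v by assumption; rewrite ?hw_h1_vu by assumption; rewrite ?hw_h1_vv by assumption; rewrite ?hw_h1_vvv by assumption; ring. Qed.

Lemma E_h1_4 : evP envE s0 (etaPn 4 [(1%nat,0%nat,0%nat,[AG 2 []])]) u0 0 = 1*(A [false;false;false])*(B [])*(B [])*(B []) + 3*(A [false;false])*(B [])*(B [])*(B [false]) + 1*(A [false;true])*(A [false])*(B [])*(B []) + 1*(A [false])*(A [false])*(B [])*(B [true]) + 2*(A [false])*(A [true;false])*(B [])*(B []) + 1*(A [false])*(B [])*(B [])*(B [false;false]) + 1*(A [false])*(B [])*(B [false])*(B [false]).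
Proof. eta_pre; rewrite ?hw_h1_u by assumption; rewrite ?hw_h1_uu by assumption; rewrite ?hw_h1_uv by assumption; rewrite ?hw_h1_uvv by assumption; rewrite ?hw_h1_v by assumption; rewrite ?hw_h1_vu by assumption; rewrite ?hw_h1_vuv by assumption; rewrite ?hw_h1_vv by assumption; rewrite ?hw_h1_vvu by assumption; rewrite ?hw_h1_vvv by assumption; rewrite ?hw_h1_vvvv by assumption; ring. Qed.

Lemma E_h1_5 : evP envE s0 (etaPn 5 [(1%nat,0%nat,0%nat,[AG 2 []])]) u0 0 = 1*(A [false;false;false;false])*(B [])*(B [])*(B [])*(B []) + 6*(A [false;false;false])*(B [])*(B [])*(B [])*(B [false]) + 1*(A [false;false;true])*(A [false])*(B [])*(B [])*(B []) + 1*(A [false;false])*(A [false;true])*(B [])*(B [])*(B []) + 5*(A [false;false])*(A [false])*(B [])*(B [])*(B [true]) + 3*(A [false;false])*(A [true;false])*(B [])*(B [])*(B []) + 4*(A [false;false])*(B [])*(B [])*(B [])*(B [false;false]) + 7*(A [false;false])*(B [])*(B [])*(B [false])*(B [false]) + 2*(A [false;true;false])*(A [false])*(B [])*(B [])*(B []) + 4*(A [false;true])*(A [false])*(B [])*(B [])*(B [false]) + 1*(A [false])*(A [false])*(B [])*(B [])*(B [false;true]) + 2*(A [false])*(A [false])*(B [])*(B [])*(B [true;false]) + 2*(A [false])*(A [false])*(B [])*(B [false])*(B [true]) + 3*(A [false])*(A [true;false;false])*(B [])*(B [])*(B []) + 6*(A [false])*(A [true;false])*(B [])*(B [])*(B [false])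 + 1*(A [false])*(B [])*(B [])*(B [])*(B [false;false;false]) + 4*(A [false])*(B [])*(B [])*(B [false;false])*(B [false]) + 1*(A [false])*(B [])*(B [false])*(B [false])*(B [false]).
Proof. eta_pre; rewrite ?hw_h1_u by assumption; rewrite ?hw_h1_uu by assumption; rewrite ?hw_h1_uuv by assumption; rewrite ?hw_h1_uv by assumption; rewrite ?hw_h1_uvu by assumption; rewrite ?hw_h1_uvv by assumption; rewrite ?hw_h1_uvvv by assumption; rewrite ?hw_h1_v by assumption; rewrite ?hw_h1_vu by assumption; rewrite ?hw_h1_vuu by assumption; rewrite ?hw_h1_vuv by assumption; rewrite ?hw_h1_vuvv by assumption; rewrite ?hw_h1_vv by assumption; rewrite ?hw_h1_vvu by assumption; rewrite ?hw_h1_vvuv by assumption; rewrite ?hw_h1_vvv by assumption; rewrite ?hw_h1_vvvu by assumption; rewrite ?hw_h1_vvvv by assumption; rewrite ?hw_h1_vvvvv by assumption; ring. Qed.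

Lemma E_h2_2 : evP envE s0 (etaPn 2 [(1%nat,0%nat,0%nat,[AG 3 []])]) u0 0 = 1*(A [false])*(B [])*(J2 1 0) + 2*(B [])*(B []).
Proof. eta_pre; rewrite ?hw_h2_u by assumption; rewrite ?hw_h2_v by assumption; rewrite ?hw_h2_vv by assumption; ring. Qed.

Lemma E_h2_3 : evP envE s0 (etaPn 3 [(1%nat,0%nat,0%nat,[AG 3 []])]) u0 0 = 1*(A [false;false])*(B [])*(B [])*(J2 1 0) + 1*(A [false])*(B [])*(B [false])*(J2 1 0) + 6*(B [])*(B [])*(B [false]).
Proof. eta_pre; rewrite ?hw_h2_u by assumption; rewrite ?hw_h2_uv by assumption; rewrite ?hw_h2_v by assumption; rewrite ?hw_h2_vu by assumption; rewrite ?hw_h2_vv by assumption; rewrite ?hw_h2_vvv by assumption; ring. Qed.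

Lemma E_h2_4 : evP envE s0 (etaPn 4 [(1%nat,0%nat,0%nat,[AG 3 []])]) u0 0 = 1*(A [false;false;false])*(B [])*(B [])*(B [])*(J2 1 0) + 3*(A [false;false])*(B [])*(B [])*(B [false])*(J2 1 0) + 1*(A [false;true])*(A [false])*(B [])*(B [])*(J2 1 0) + 3*(A [false])*(A [false])*(B [])*(B [])*(J2 2 0) + 1*(A [false])*(A [false])*(B [])*(B [true])*(J2 1 0) + 2*(A [false])*(A [true;false])*(B [])*(B [])*(J2 1 0) + 1*(A [false])*(B [])*(B [])*(B [false;false])*(J2 1 0) + 8*(A [false])*(B [])*(B [])*(B [true]) + 1*(A [false])*(B [])*(B [false])*(B [false])*(J2 1 0) + 8*(B [])*(B [])*(B [])*(B [false;false]) + 14*(B [])*(B [])*(B [false])*(B [false]).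
Proof. eta_pre; rewrite ?hw_h2_u by assumption; rewrite ?hw_h2_uu by assumption; rewrite ?hw_h2_uv by assumption; rewrite ?hw_h2_uvv by assumption; rewrite ?hw_h2_v by assumption; rewrite ?hw_h2_vu by assumption; rewrite ?hw_h2_vuv by assumption; rewrite ?hw_h2_vv by assumption; rewrite ?hw_h2_vvu by assumption; rewrite ?hw_h2_vvv by assumption; rewrite ?hw_h2_vvvv by assumption; ring. Qed.

Lemma E_h2_5 : evP envE s0 (etaPn 5 [(1%nat,0%nat,0%nat,[AG 3 []])]) u0 0 = 1*(A [false;false;false;false])*(B [])*(B [])*(B [])*(B [])*(J2 1 0) + 6*(A [false;false;false])*(B [])*(B [])*(B [])*(B [false])*(J2 1 0) + 1*(A [false;false;true])*(A [false])*(B [])*(B [])*(B [])*(J2 1 0) + 1*(A [false;false])*(A [false;true])*(B [])*(B [])*(B [])*(J2 1 0) + 10*(A [false;false])*(A [false])*(B [])*(B [])*(B [])*(J2 2 0) + 5*(A [false;false])*(A [false])*(B [])*(B [])*(B [true])*(J2 1 0) + 3*(A [false;false])*(A [true;false])*(B [])*(B [])*(B [])*(J2 1 0) + 4*(A [false;false])*(B [])*(B [])*(B [])*(B [false;false])*(J2 1 0) + 10*(A [false;false])*(B [])*(B [])*(B [])*(B [true]) + 7*(A [false;false])*(B [])*(B [])*(B [false])*(B [false])*(J2 1 0) + 2*(A [false;true;false])*(A [false])*(B [])*(B [])*(B [])*(J2 1 0) + 4*(A [false;true])*(A [false])*(B [])*(B [])*(B [false])*(J2 1 0) + 1*(A [false])*(A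 [false])*(B [])*(B [])*(B [false;true])*(J2 1 0) + 10*(A [false])*(A [false])*(B [])*(B [])*(B [false])*(J2 2 0) + 2*(A [false])*(A [false])*(B [])*(B [])*(B [true;false])*(J2 1 0) + 2*(A [false])*(A [false])*(B [])*(B [false])*(B [true])*(J2 1 0) + 3*(A [false])*(A [true;false;false])*(B [])*(B [])*(B [])*(J2 1 0) + 6*(A [false])*(A [true;false])*(B [])*(B [])*(B [false])*(J2 1 0) + 1*(A [false])*(B [])*(B [])*(B [])*(B [false;false;false])*(J2 1 0) + 10*(A [false])*(B [])*(B [])*(B [])*(B [false;true]) + 20*(A [false])*(B [])*(B [])*(B [])*(B [true;false]) + 4*(A [false])*(B [])*(B [])*(B [false;false])*(B [false])*(J2 1 0) + 40*(A [false])*(B [])*(B [])*(B [false])*(B [true]) + 1*(A [false])*(B [])*(B [false])*(B [false])*(B [false])*(J2 1 0) + 10*(B [])*(B [])*(B [])*(B [])*(B [false;false;false]) + 60*(B [])*(B [])*(B [])*(B [false;false])*(B [false]) + 30*(B [])*(B [])*(B [false])*(B [false])*(B [false]).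
Proof. eta_pre; rewrite ?hw_h2_u by assumption; rewrite ?hw_h2_uu by assumption; rewrite ?hw_h2_uuv by assumption; rewrite ?hw_h2_uv by assumption; rewrite ?hw_h2_uvu by assumption; rewrite ?hw_h2_uvv by assumption; rewrite ?hw_h2_uvvv by assumption; rewrite ?hw_h2_v by assumption; rewrite ?hw_h2_vu by assumption; rewrite ?hw_h2_vuu by assumption; rewrite ?hw_h2_vuv by assumption; rewrite ?hw_h2_vuvv by assumption; rewrite ?hw_h2_vv by assumption; rewrite ?hw_h2_vvu by assumption; rewrite ?hw_h2_vvuv by assumption; rewrite ?hw_h2_vvv by assumption; rewrite ?hw_h2_vvvu by assumption; rewrite ?hw_h2_vvvv by assumption; rewrite ?hw_h2_vvvvv by assumption; ring. Qed.

Lemma E_h3_2 : evP envE s0 (etaPn 2 [(1%nat,0%nat,0%nat,[AG 4 []])]) u0 0 = 1*(A [false])*(B [])*(J3 1 0) + 1*(B [])*(B [])*(J3 0 2).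
Proof. eta_pre; rewrite ?hw_h3_u by assumption; rewrite ?hw_h3_v by assumption; rewrite ?hw_h3_vv by assumption; ring. Qed.

Lemma E_h3_3 : evP envE s0 (etaPn 3 [(1%nat,0%nat,0%nat,[AG 4 []])]) u0 0 = 1*(A [false;false])*(B [])*(B [])*(J3 1 0) + 1*(A [false])*(B [])*(B [false])*(J3 1 0) + 1*(B [])*(B [])*(B [])*(J3 0 3) + 3*(B [])*(B [])*(B [false])*(J3 0 2).
Proof. eta_pre; rewrite ?hw_h3_u by assumption; rewrite ?hw_h3_uv by assumption; rewrite ?hw_h3_v by assumption; rewrite ?hw_h3_vu by assumption; rewrite ?hw_h3_vv by assumption; rewrite ?hw_h3_vvv by assumption; ring. Qed.

Lemma E_h3_4 : evP envE s0 (etaPn 4 [(1%nat,0%nat,0%nat,[AG 4 []])]) u0 0 = 1*(A [false;false;false])*(B [])*(B [])*(B [])*(J3 1 0) + 3*(A [false;false])*(B [])*(B [])*(B [false])*(J3 1 0) + 1*(A [false;true])*(A [false])*(B [])*(B [])*(J3 1 0) + 3*(A [false])*(A [false])*(B [])*(B [])*(J3 2 0) + 1*(A [false])*(A [false])*(B [])*(B [true])*(J3 1 0) + 2*(A [false])*(A [true;false])*(B [])*(B [])*(J3 1 0) + 6*(A [false])*(B [])*(B [])*(B [])*(J3 1 2) + 1*(A [false])*(B [])*(B [])*(B [false;false])*(J3 1 0) + 4*(A [false])*(B [])*(B [])*(B [true])*(J3 0 2) + 1*(A [false])*(B [])*(B [false])*(B [false])*(J3 1 0) + 1*(B [])*(B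 [])*(B [])*(B [])*(J3 0 4) + 4*(B [])*(B [])*(B [])*(B [false;false])*(J3 0 2) + 6*(B [])*(B [])*(B [])*(B [false])*(J3 0 3) + 7*(B [])*(B [])*(B [false])*(B [false])*(J3 0 2).
Proof. eta_pre; rewrite ?hw_h3_u by assumption; rewrite ?hw_h3_uu by assumption; rewrite ?hw_h3_uv by assumption; rewrite ?hw_h3_uvv by assumption; rewrite ?hw_h3_v by assumption; rewrite ?hw_h3_vu by assumption; rewrite ?hw_h3_vuv by assumption; rewrite ?hw_h3_vv by assumption; rewrite ?hw_h3_vvu by assumption; rewrite ?hw_h3_vvv by assumption; rewrite ?hw_h3_vvvv by assumption; ring. Qed.

Lemma E_h3_5 : evP envE s0 (etaPn 5 [(1%nat,0%nat,0%nat,[AG 4 []])]) u0 0 = 1*(A [false;false;false;false])*(B [])*(B [])*(B [])*(B [])*(J3 1 0) + 6*(A [false;false;false])*(B [])*(B [])*(B [])*(B [false])*(J3 1 0) + 1*(A [false;false;true])*(A [false])*(B [])*(B [])*(B [])*(J3 1 0) + 1*(A [false;false])*(A [false;true])*(B [])*(B [])*(B [])*(J3 1 0) + 10*(A [false;false])*(A [false])*(B [])*(B [])*(B [])*(J3 2 0) + 5*(A [false;false])*(A [false])*(B [])*(B [])*(B [true])*(J3 1 0) + 3*(A [false;false])*(A [true;false])*(B [])*(B [])*(B [])*(J3 1 0) + 10*(A [false;false])*(B [])*(B [])*(B [])*(B [])*(J3 1 2) + 4*(A [false;false])*(B [])*(B [])*(B [])*(B [false;false])*(J3 1 0) + 5*(A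 [false;false])*(B [])*(B [])*(B [])*(B [true])*(J3 0 2) + 7*(A [false;false])*(B [])*(B [])*(B [false])*(B [false])*(J3 1 0) + 2*(A [false;true;false])*(A [false])*(B [])*(B [])*(B [])*(J3 1 0) + 4*(A [false;true])*(A [false])*(B [])*(B [])*(B [false])*(J3 1 0) + 1*(A [false])*(A [false])*(B [])*(B [])*(B [false;true])*(J3 1 0) + 10*(A [false])*(A [false])*(B [])*(B [])*(B [false])*(J3 2 0) + 2*(A [false])*(A [false])*(B [])*(B [])*(B [true;false])*(J3 1 0) + 2*(A [false])*(A [false])*(B [])*(B [false])*(B [true])*(J3 1 0) + 3*(A [false])*(A [true;false;false])*(B [])*(B [])*(B [])*(J3 1 0) + 6*(A [false])*(A [true;false])*(B [])*(B [])*(B [false])*(J3 1 0) + 10*(A [false])*(B [])*(B [])*(B [])*(B [])*(J3 1 3) + 1*(A [false])*(B [])*(B [])*(B [])*(B [false;false;false])*(J3 1 0) + 5*(A [false])*(B [])*(B [])*(B [])*(B [false;true])*(J3 0 2) + 40*(A [false])*(B [])*(B [])*(B [])*(B [false])*(J3 1 2) + 10*(A [false])*(B [])*(B [])*(B [])*(B [true;false])*(J3 0 2) + 10*(A [false])*(B [])*(B [])*(B [])*(B [true])*(J3 0 3) + 4*(A [false])*(B [])*(B [])*(B [false;false])*(B [false])*(J3 1 0) + 20*(A [false])*(B [])*(B [])*(B [false])*(B [true])*(J3 0 2) + 1*(A [false])*(B [])*(B [false])*(B [false])*(B [false])*(J3 1 0) + 1*(B [])*(B [])*(B [])*(B [])*(B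 [])*(J3 0 5) + 5*(B [])*(B [])*(B [])*(B [])*(B [false;false;false])*(J3 0 2) + 10*(B [])*(B [])*(B [])*(B [])*(B [false;false])*(J3 0 3) + 10*(B [])*(B [])*(B [])*(B [])*(B [false])*(J3 0 4) + 30*(B [])*(B [])*(B [])*(B [false;false])*(B [false])*(J3 0 2) + 25*(B [])*(B [])*(B [])*(B [false])*(B [false])*(J3 0 3) + 15*(B [])*(B [])*(B [false])*(B [false])*(B [false])*(J3 0 2).
Proof. eta_pre; rewrite ?hw_h3_u by assumption; rewrite ?hw_h3_uu by assumption; rewrite ?hw_h3_uuv by assumption; rewrite ?hw_h3_uv by assumption; rewrite ?hw_h3_uvu by assumption; rewrite ?hw_h3_uvv by assumption; rewrite ?hw_h3_uvvv by assumption; rewrite ?hw_h3_v by assumption; rewrite ?hw_h3_vu by assumption; rewrite ?hw_h3_vuu by assumption; rewrite ?hw_h3_vuv by assumption; rewrite ?hw_h3_vuvv by assumption; rewrite ?hw_h3_vv by assumption; rewrite ?hw_h3_vvu by assumption; rewrite ?hw_h3_vvuv by assumption; rewrite ?hw_h3_vvv by assumption; rewrite ?hw_h3_vvvu by assumption; rewrite ?hw_h3_vvvv by assumption; rewrite ?hw_h3_vvvvv by assumption; ring. Qed.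

End Eta.

End Eta.
Import Eta.

Module Inv.

Section Inv.
Variables (f21 f31 d1 d2 d3 : R -> R) (f24 f34 c0 d4 : R -> R -> R)
  (c2 c3 : R -> R -> R -> R) (s0 u0 : R) (a b : R -> R -> R).
Hypotheses (Sf21 : smooth1 f21) (Sf31 : smooth1 f31) (Sf24 : smooth2 f24) (Sf34 : smooth2 f34)
  (Sc0 : smooth2 c0) (Sd4 : smooth2 d4) (Sc2 : smooth3 c2) (Sc3 : smooth3 c3).
Hypothesis Hz : forall w, forallb (fun t => t) w = true -> pd2 w a u0 0 = 0.

Local Notation envE := (Eta.envE f21 f31 d1 d2 d3 f24 f34 c0 d4 c2 c3 s0 a b).
Local Notation A := (Eta.A u0 a).
Local Notation B := (Eta.B u0 b).
Local Notation J2 := (Jets.J2 f21 f24 s0 u0).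
Local Notation J3 := (Jets.J3 f31 d1 d2 d3 f34 c0 d4 c2 c3 s0 u0).

Definition Ev (k : nat) : V3 :=
  mkV (evP envE s0 (etaPn k [(1%nat,0%nat,0%nat,[AG 2 []])]) u0 0)
      (evP envE s0 (etaPn k [(1%nat,0%nat,0%nat,[AG 3 []])]) u0 0)
      (evP envE s0 (etaPn k [(1%nat,0%nat,0%nat,[AG 4 []])]) u0 0).

Definition huV : V3 := mkV 1 (J2 1 0) (J3 1 0).
Definition Mq : R := 1 + J2 1 0 ^ 2 + J3 1 0 ^ 2.
Definition qq : R := (2 * J2 1 0 + J3 0 2 * J3 1 0) / Mq.
Definition Kb : R := 2 * (3 * qq ^ 2 * J3 2 0 - 6 * qq * J3 1 2 + J3 0 4) - J3 0 2 * (3 * qq ^ 2 * J2 2 0).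
Definition Kc : R := 2 * (3 * J3 0 5 - 30 * qq * J3 1 3).

Lemma Mq_pos : 0 < Mq.
Proof. unfold Mq. nra. Qed.

Ltac rwE := rewrite ?E_h1_2, ?E_h2_2, ?E_h3_2, ?E_h1_3, ?E_h2_3, ?E_h3_3,
  ?E_h1_4, ?E_h2_4, ?E_h3_4, ?E_h1_5, ?E_h2_5, ?E_h3_5 by assumption.
Ltac rwEin H := rewrite ?E_h1_2, ?E_h2_2, ?E_h3_2, ?E_h1_3, ?E_h2_3, ?E_h3_3,
  ?E_h1_4, ?E_h2_4, ?E_h3_4, ?E_h1_5, ?E_h2_5, ?E_h3_5 in H by assumption.

Lemma a01_sol : dot huV (Ev 2) = 0 -> B [] <> 0 ->
  A [false] = - B [] * qq.
Proof.
  intros HC Hb. unfold Ev, dot, huV in HC. cbn [v1 v2 v3 mkV fst snd] in HC.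
  rwEin HC.
  unfold qq. assert (HM := Mq_pos). unfold Mq in *.
  apply (Rmult_eq_reg_l (B [] * (1 + J2 1 0 ^ 2 + J3 1 0 ^ 2))).
  2:{ apply Rmult_integral_contrapositive; split; lra. }
  field_simplify; [|lra]. nra.
Qed.

Lemma bias_core : dot huV (Ev 2) = 0 -> 0 < B [] -> J3 0 3 = 0 ->
  det3 huV (Ev 2) (Ev 4) = B [] ^ 6 * Kb.
Proof.
  intros HC Hb HJ. assert (Ha := a01_sol HC ltac:(lra)).
  unfold det3, dot, cross, huV, Ev. cbn [v1 v2 v3 mkV fst snd].
  rwE. rewrite Ha, HJ. unfold Kb, qq. assert (HM := Mq_pos). field. lra.
Qed.

Lemma l_sol (l : R) : Ev 3 = vscale l (Ev 2) -> 0 < B [] -> J3 0 3 = 0 -> l = 3 * B [false].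
Proof.
  intros Hl Hb HJ.
  assert (E1 := f_equal v1 Hl). assert (E2 := f_equal v2 Hl).
  unfold Ev, vscale in E1, E2. cbn [v1 v2 v3 mkV fst snd] in E1, E2.
  rwEin E1. rwEin E2.
  apply (f_equal (fun t => t * J2 1 0)) in E1.
  assert (HH : l * (2 * B [] ^ 2) = 3 * B [false] * (2 * B [] ^ 2)) by (ring_simplify in E1; ring_simplify in E2; ring_simplify; lra).
  apply Rmult_eq_reg_r in HH; [lra|]. nra.
Qed.

Lemma a02_sol : dot huV (Ev 2) = 0 -> dot huV (Ev 3) = 0 -> 0 < B [] -> J3 0 3 = 0 ->
  A [false;false] = - 2 * B [false] * qq.
Proof.
  intros HC2 HC3 Hb HJ. assert (Ha := a01_sol HC2 ltac:(lra)).
  unfold Ev, dot, huV in HC3. cbn [v1 v2 v3 mkV fst snd] in HC3.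
  rwEin HC3. rewrite Ha, HJ in HC3.
  assert (HM := Mq_pos).
  assert (H1 : Mq * (A [false;false] * B [] ^ 2 - B [] * qq * B [] * B [false]
                     + 3 * B [] ^ 2 * B [false] * qq) = 0).
  { rewrite <- HC3. unfold qq. unfold Mq in *. field. lra. }
  apply Rmult_integral in H1. destruct H1 as [H1|H1]; [lra|].
  assert (H2 : (A [false;false] + 2 * B [false] * qq) * B [] ^ 2 = 0) by (rewrite <- H1; ring).
  apply Rmult_integral in H2. destruct H2 as [H2|H2]; [lra|].
  exfalso. apply (pow_nonzero (B []) 2); lra.
Qed.

Lemma rc_core (l : R) : dot huV (Ev 2) = 0 -> dot huV (Ev 3) = 0 ->
  Ev 3 = vscale l (Ev 2) -> 0 < B [] -> J3 0 3 = 0 ->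
  det3 huV (Ev 2) (vsub (vscale 3 (Ev 5)) (vscale (10 * l) (Ev 4))) = B [] ^ 7 * Kc.
Proof.
  intros HC2 HC3 Hl Hb HJ.
  assert (Ha := a01_sol HC2 ltac:(lra)). assert (Ha2 := a02_sol HC2 HC3 Hb HJ).
  assert (HL := l_sol l Hl Hb HJ).
  unfold det3, dot, cross, huV, Ev, vsub, vscale. cbn [v1 v2 v3 mkV fst snd].
  rwE. rewrite HL, Ha2, Ha, HJ. unfold Kc, qq. assert (HM := Mq_pos). field. lra.
Qed.

Definition Nc : R := (J2 1 0 * J3 0 2 - J3 1 0 * 2) ^ 2 + (J3 1 0 * 0 - 1 * J3 0 2) ^ 2 + (1 * 2 - J2 1 0 * 0) ^ 2.

Lemma Nc_ge : 4 <= Nc.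
Proof. unfold Nc. pose proof (pow2_ge_0 (J2 1 0 * J3 0 2 - J3 1 0 * 2)).
  pose proof (pow2_ge_0 (J3 1 0 * 0 - 1 * J3 0 2)).
  replace ((1 * 2 - J2 1 0 * 0) ^ 2) with 4 by ring. lra. Qed.

Lemma norm_cross : 0 < B [] -> vnorm (cross huV (Ev 2)) = B [] ^ 2 * sqrt Nc.
Proof.
  intros Hb. unfold vnorm.
  replace (dot (cross huV (Ev 2)) (cross huV (Ev 2))) with ((B [] ^ 2) ^ 2 * Nc).
  2:{ unfold dot, cross, huV, Ev, Nc. cbn [v1 v2 v3 mkV fst snd]. rwE. ring. }
  rewrite sqrt_mult_alt by (apply pow_le; apply pow_le; lra).
  rewrite sqrt_pow2 by (apply pow_le; lra). reflexivity.
Qed.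

Lemma norm_hu : vnorm huV = sqrt Mq.
Proof. unfold vnorm, dot, huV, Mq. cbn [v1 v2 v3 mkV fst snd]. f_equal. ring. Qed.

Lemma bias_val : dot huV (Ev 2) = 0 -> 0 < B [] -> J3 0 3 = 0 ->
  (vnorm huV) ^ 2 * det3 huV (Ev 2) (Ev 4) / (vnorm (cross huV (Ev 2))) ^ 3
  = Mq * Kb / (sqrt Nc) ^ 3.
Proof.
  intros HC Hb HJ. rewrite bias_core, norm_cross, norm_hu by auto.
  rewrite pow2_sqrt by (pose proof Mq_pos; lra).
  assert (0 < sqrt Nc) by (apply sqrt_lt_R0; pose proof Nc_ge; lra).
  field. split; lra.
Qed.

Lemma rc_val (l : R) : dot huV (Ev 2) = 0 -> dot huV (Ev 3) = 0 ->
  Ev 3 = vscale l (Ev 2) -> 0 < B [] -> J3 0 3 = 0 ->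
  (sqrt (vnorm huV)) ^ 5 * det3 huV (Ev 2) (vsub (vscale 3 (Ev 5)) (vscale (10 * l) (Ev 4)))
    / (sqrt (vnorm (cross huV (Ev 2)))) ^ 7
  = sqrt (sqrt Mq) ^ 5 * Kc / (sqrt (sqrt Nc)) ^ 7.
Proof.
  intros HC2 HC3 Hl Hb HJ. rewrite rc_core, norm_cross, norm_hu by auto.
  rewrite sqrt_mult_alt by (apply pow_le; lra).
  rewrite sqrt_pow2 by lra.
  assert (0 < sqrt (sqrt Nc)) by (apply sqrt_lt_R0; apply sqrt_lt_R0; pose proof Nc_ge; lra).
  field. split; lra.
Qed.

End Inv.

End Inv.
Import Inv.

Module Tl.

Definition T (F : R -> R) (k0 k1 : R) : Prop :=
  exists C d, 0 < d /\ forall st, Rabs st < d -> Rabs (F st - k0 - k1 * st) <= C * st ^ 2.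

Lemma T_norm F k0 k1 : T F k0 k1 ->
  exists C d, 0 < d /\ d <= 1 /\ 0 <= C /\ forall st, Rabs st < d -> Rabs (F st - k0 - k1 * st) <= C * st ^ 2.
Proof.
  intros [C [d [Hd H]]]. exists (Rabs C), (Rmin d 1). repeat split.
  - apply Rmin_pos; lra.
  - apply Rmin_r.
  - apply Rabs_pos.
  - intros st Hst. assert (Rabs st < d) by (eapply Rlt_le_trans; [exact Hst| apply Rmin_l]).
    eapply Rle_trans; [apply H; auto|]. apply Rmult_le_compat_r; [nra| apply RRle_abs].
Qed.

Lemma T_ext F G k0 k1 : (forall st, F st = G st) -> T F k0 k1 -> T G k0 k1.
Proof. intros E [C [d [Hd H]]]. exists C, d. split; auto. intros st Hs. rewrite <- E. auto. Qed.

Lemma T_const r : T (fun _ => r) r 0.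
Proof. exists 0, 1. split; [lra|]. intros st _. replace (r - r - 0 * st) with 0 by ring. rewrite Rabs_R0. nra. Qed.

Lemma T_id : T (fun st => st) 0 1.
Proof. exists 0, 1. split; [lra|]. intros st _. replace (st - 0 - 1 * st) with 0 by ring. rewrite Rabs_R0. nra. Qed.

Lemma T_add F G a0 a1 b0 b1 : T F a0 a1 -> T G b0 b1 -> T (fun st => F st + G st) (a0 + b0) (a1 + b1).
Proof.
  intros [C1 [d1 [H1 HF]]] [C2 [d2 [H2 HG]]]. exists (C1 + C2), (Rmin d1 d2). split; [apply Rmin_pos; lra|].
  intros st Hs. assert (Rabs st < d1) by (eapply Rlt_le_trans; [exact Hs| apply Rmin_l]).
  assert (Rabs st < d2) by (eapply Rlt_le_trans; [exact Hs| apply Rmin_r]).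
  replace (F st + G st - (a0 + b0) - (a1 + b1) * st) with ((F st - a0 - a1 * st) + (G st - b0 - b1 * st)) by ring.
  eapply Rle_trans; [apply Rabs_triang|]. specialize (HF st H). specialize (HG st H0). nra.
Qed.

Lemma T_opp F a0 a1 : T F a0 a1 -> T (fun st => - F st) (- a0) (- a1).
Proof.
  intros [C [d [Hd H]]]. exists C, d. split; auto. intros st Hs.
  replace (- F st - - a0 - - a1 * st) with (- (F st - a0 - a1 * st)) by ring. rewrite Rabs_Ropp. auto.
Qed.

Lemma T_mul F G a0 a1 b0 b1 : T F a0 a1 -> T G b0 b1 ->
  T (fun st => F st * G st) (a0 * b0) (a0 * b1 + a1 * b0).
Proof.
  intros HF HG. apply T_norm in HF. apply T_norm in HG.
  destruct HF as [C1 [d1 [H1 [H1' [HC1 HF]]]]]. destruct HG as [C2 [d2 [H2 [H2' [HC2 HG]]]]].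
  exists (Rabs a0 * C2 + Rabs b0 * C1 + (Rabs a1 + C1) * (Rabs b1 + C2)), (Rmin d1 d2).
  split; [apply Rmin_pos; lra|].
  intros st Hs. assert (Hs1 : Rabs st < d1) by (eapply Rlt_le_trans; [exact Hs| apply Rmin_l]).
  assert (Hs2 : Rabs st < d2) by (eapply Rlt_le_trans; [exact Hs| apply Rmin_r]).
  specialize (HF st Hs1). specialize (HG st Hs2).
  set (e1 := F st - a0 - a1 * st) in *. set (e2 := G st - b0 - b1 * st) in *.
  assert (EF : F st = a0 + a1 * st + e1) by (unfold e1; ring).
  assert (EG : G st = b0 + b1 * st + e2) by (unfold e2; ring).
  rewrite EF, EG.
  replace ((a0 + a1 * st + e1) * (b0 + b1 * st + e2) - a0 * b0 - (a0 * b1 + a1 * b0) * st)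
    with (a0 * e2 + b0 * e1 + (a1 * st + e1) * (b1 * st + e2)) by ring.
  assert (Hsq : st ^ 2 = Rabs st * Rabs st) by (rewrite <- Rabs_mult; rewrite Rabs_right; [ring| nra]).
  assert (Ha : Rabs st <= 1) by lra.
  assert (Hab : 0 <= Rabs st) by apply Rabs_pos.
  assert (Hsq2 : st ^ 2 <= Rabs st) by (rewrite Hsq; nra).
  assert (K1 : Rabs (a1 * st + e1) <= (Rabs a1 + C1) * Rabs st).
  { eapply Rle_trans; [apply Rabs_triang|]. rewrite Rabs_mult.
    assert (C1 * st ^ 2 <= C1 * Rabs st) by (apply Rmult_le_compat_l; auto). nra. }
  assert (K2 : Rabs (b1 * st + e2) <= (Rabs b1 + C2) * Rabs st).
  { eapply Rle_trans; [apply Rabs_triang|]. rewrite Rabs_mult.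
    assert (C2 * st ^ 2 <= C2 * Rabs st) by (apply Rmult_le_compat_l; auto). nra. }
  eapply Rle_trans; [apply Rabs_triang|]. eapply Rle_trans; [apply Rplus_le_compat_r; apply Rabs_triang|].
  rewrite !Rabs_mult.
  assert (0 <= Rabs st) by apply Rabs_pos.
  assert (Rabs (a1 * st + e1) * Rabs (b1 * st + e2) <= (Rabs a1 + C1) * Rabs st * ((Rabs b1 + C2) * Rabs st)).
  { apply Rmult_le_compat; try apply Rabs_pos; auto. }
  assert (0 <= Rabs a0) by apply Rabs_pos. assert (0 <= Rabs b0) by apply Rabs_pos.
  assert (Rabs a0 * Rabs e2 <= Rabs a0 * (C2 * st ^ 2)) by (apply Rmult_le_compat_l; auto).
  assert (Rabs b0 * Rabs e1 <= Rabs b0 * (C1 * st ^ 2)) by (apply Rmult_le_compat_l; auto).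
  rewrite Hsq in *. nra.
Qed.

Lemma quot_bound N D K1 m s2 : 0 < m -> 0 <= s2 -> Rabs N <= K1 * s2 -> m <= Rabs D ->
  Rabs (N / D) <= (K1 / m) * s2.
Proof.
  intros Hm Hs HN HD. unfold Rdiv. rewrite Rabs_mult, Rabs_inv.
  assert (0 < Rabs D) by lra.
  assert (/ Rabs D <= / m) by (apply Rinv_le_contravar; lra).
  assert (0 <= Rabs N) by apply Rabs_pos.
  assert (0 < / Rabs D) by (apply Rinv_0_lt_compat; lra).
  assert (0 <= K1 * s2) by lra.
  apply Rle_trans with (K1 * s2 * / m).
  - apply Rmult_le_compat; auto; lra.
  - right; field; lra.
Qed.

Lemma T_small F k0 k1 : T F k0 k1 -> forall eta, 0 < eta ->
  exists C d, 0 < d /\ d <= 1 /\ 0 <= C /\ forall st, Rabs st < d ->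
    Rabs (F st - k0 - k1 * st) <= C * st ^ 2 /\ Rabs (F st - k0) <= eta /\
    Rabs (F st - k0) <= (Rabs k1 + C) * Rabs st /\ st ^ 2 <= Rabs st /\ st ^ 2 = Rabs st * Rabs st.
Proof.
  intros HF eta Heta. apply T_norm in HF. destruct HF as [C [d [Hd [Hd1 [HC H]]]]].
  exists C, (Rmin d (eta / (Rabs k1 + C + 1))).
  assert (0 < Rabs k1 + C + 1) by (assert (0 <= Rabs k1) by apply Rabs_pos; lra).
  assert (0 < eta / (Rabs k1 + C + 1)) by (apply Rdiv_lt_0_compat; lra).
  split; [apply Rmin_pos; lra|]. split; [eapply Rle_trans; [apply Rmin_l| lra]|]. split; [lra|].
  intros st Hs. assert (Hs1 : Rabs st < d) by (eapply Rlt_le_trans; [exact Hs| apply Rmin_l]).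
  assert (Hs2 : Rabs st < eta / (Rabs k1 + C + 1)) by (eapply Rlt_le_trans; [exact Hs| apply Rmin_r]).
  assert (Hsq : st ^ 2 = Rabs st * Rabs st) by (rewrite <- Rabs_mult; rewrite Rabs_right; [ring| nra]).
  assert (Hab : 0 <= Rabs st) by apply Rabs_pos.
  assert (Hsq2 : st ^ 2 <= Rabs st) by (rewrite Hsq; nra).
  specialize (H st Hs1).
  assert (Hl : Rabs (F st - k0) <= (Rabs k1 + C) * Rabs st).
  { replace (F st - k0) with ((F st - k0 - k1 * st) + k1 * st) by ring.
    eapply Rle_trans; [apply Rabs_triang|]. rewrite Rabs_mult.
    assert (C * st ^ 2 <= C * Rabs st) by (apply Rmult_le_compat_l; auto). nra. }
  assert (Rabs st * (Rabs k1 + C + 1) <= eta).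
  { apply Rmult_lt_compat_r with (r := Rabs k1 + C + 1) in Hs2; [|lra].
    unfold Rdiv in Hs2. rewrite Rmult_assoc, Rinv_l in Hs2; lra. }
  repeat split; auto. nra.
Qed.

Lemma T_inv F k0 k1 : T F k0 k1 -> k0 <> 0 -> T (fun st => / F st) (/ k0) (- k1 / k0 ^ 2).
Proof.
  intros HF Hk. assert (Hk0 : 0 < Rabs k0) by (apply Rabs_pos_lt; auto).
  destruct (T_small F k0 k1 HF (Rabs k0 / 2) ltac:(lra)) as [C [d [Hd [Hd1 [HC H]]]]].
  exists ((C * Rabs k0 + Rabs k1 * (Rabs k1 + C)) / (Rabs k0 / 2 * (Rabs k0 * Rabs k0))), d.
  split; auto. intros st Hs. destruct (H st Hs) as [He [Hn [Hl [Hsq2 Hsq]]]].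
  assert (HFa : Rabs k0 / 2 <= Rabs (F st)).
  { assert (Rabs k0 <= Rabs (F st) + Rabs (F st - k0)).
    { replace k0 with (F st - (F st - k0)) at 1 by ring. eapply Rle_trans; [apply Rabs_triang|].
      rewrite Rabs_Ropp. lra. }
    lra. }
  assert (HF0 : F st <> 0) by (intro E; rewrite E, Rabs_R0 in HFa; lra).
  set (e := F st - k0 - k1 * st) in *.
  replace (/ F st - / k0 - - k1 / k0 ^ 2 * st) with
    ((- e * k0 + k1 * st * (k1 * st + e)) / (F st * (k0 * k0))).
  2:{ unfold e. field. split; auto. }
  apply quot_bound.
  - assert (0 < Rabs k0 * Rabs k0) by nra. nra.
  - nra.
  - eapply Rle_trans; [apply Rabs_triang|]. rewrite Rabs_mult, Rabs_Ropp, !Rabs_mult.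
    assert (0 <= Rabs st) by apply Rabs_pos. assert (0 <= Rabs k1) by apply Rabs_pos.
    assert (Rabs (k1 * st + e) <= (Rabs k1 + C) * Rabs st).
    { eapply Rle_trans; [apply Rabs_triang|]. rewrite Rabs_mult.
      assert (C * st ^ 2 <= C * Rabs st) by (apply Rmult_le_compat_l; auto). nra. }
    assert (Rabs e * Rabs k0 <= C * st ^ 2 * Rabs k0) by (apply Rmult_le_compat_r; lra).
    assert (Rabs k1 * Rabs st * Rabs (k1 * st + e) <= Rabs k1 * Rabs st * ((Rabs k1 + C) * Rabs st)).
    { apply Rmult_le_compat_l; [nra | auto]. }
    rewrite Hsq in *. nra.
  - rewrite !Rabs_mult. assert (0 <= Rabs (F st)) by apply Rabs_pos.
    apply Rmult_le_compat; try lra; nra.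
Qed.

Lemma T_sqrt F k0 k1 : T F k0 k1 -> 0 < k0 ->
  T (fun st => sqrt (F st)) (sqrt k0) (k1 / (2 * sqrt k0)).
Proof.
  intros HF Hk. set (r := sqrt k0). assert (Hr : 0 < r) by (apply sqrt_lt_R0; auto).
  assert (Hrr : r * r = k0) by (apply sqrt_sqrt; lra).
  destruct (T_small F k0 k1 HF (k0 / 2) ltac:(lra)) as [C [d [Hd [Hd1 [HC H]]]]].
  exists ((2 * r * C + Rabs k1 * (Rabs k1 + C) / r) / (2 * r * r)), d.
  split; auto. intros st Hs. destruct (H st Hs) as [He [Hn [Hl [Hsq2 Hsq]]]].
  assert (HFp : k0 / 2 <= F st) by (apply Rabs_le_between in Hn; lra).
  set (G := sqrt (F st)). assert (HG0 : 0 <= G) by apply sqrt_pos.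
  assert (HGG : G * G = F st) by (apply sqrt_sqrt; lra).
  set (e := F st - k0 - k1 * st) in *.
  assert (HGr : 0 < G + r) by lra.
  assert (HrG : r - G = (k0 - F st) / (G + r)) by (rewrite <- Hrr, <- HGG; field; lra).
  replace (G - r - k1 / (2 * r) * st) with
    ((2 * r * e + k1 * st * (r - G)) / (2 * r * (G + r))).
  2:{ rewrite HrG. unfold e. rewrite <- HGG, <- Hrr. field. split; lra. }
  apply quot_bound.
  - nra.
  - nra.
  - eapply Rle_trans; [apply Rabs_triang|]. rewrite !Rabs_mult.
    assert (0 <= Rabs st) by apply Rabs_pos. assert (0 <= Rabs k1) by apply Rabs_pos.
    assert (HrG' : Rabs (r - G) <= (Rabs k1 + C) * Rabs st / r).
    { rewrite HrG. unfold Rdiv. rewrite Rabs_mult, Rabs_inv, (Rabs_right (G + r)) by lra.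
      replace (k0 - F st) with (- (F st - k0)) by ring. rewrite Rabs_Ropp.
      assert (/ (G + r) <= / r) by (apply Rinv_le_contravar; lra).
      assert (0 < / (G + r)) by (apply Rinv_0_lt_compat; lra).
      assert (0 <= Rabs (F st - k0)) by apply Rabs_pos.
      apply Rmult_le_compat; auto; lra. }
    rewrite (Rabs_right 2) by lra. rewrite (Rabs_right r) by lra.
    assert (2 * r * Rabs e <= 2 * r * (C * st ^ 2)) by (apply Rmult_le_compat_l; lra).
    assert (Rabs k1 * Rabs st * Rabs (r - G) <= Rabs k1 * Rabs st * ((Rabs k1 + C) * Rabs st / r)).
    { apply Rmult_le_compat_l; [nra | auto]. }
    replace (Rabs k1 * Rabs st * ((Rabs k1 + C) * Rabs st / r)) with
      (Rabs k1 * (Rabs k1 + C) / r * (Rabs st * Rabs st)) in H3 by (field; lra).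
    rewrite Hsq in *. nra.
  - rewrite !Rabs_mult. rewrite (Rabs_right 2) by lra. rewrite (Rabs_right r) by lra.
    rewrite (Rabs_right (G + r)) by lra. nra.
Qed.

Lemma T_eqk F a b a' b' : T F a b -> a = a' -> b = b' -> T F a' b'.
Proof. intros H <- <-; exact H. Qed.

Lemma T_sub F G a0 a1 b0 b1 : T F a0 a1 -> T G b0 b1 -> T (fun st => F st - G st) (a0 - b0) (a1 - b1).
Proof.
  intros HF HG. eapply T_ext; [| apply (T_add F (fun st => - G st) a0 a1 (- b0) (- b1) HF (T_opp G b0 b1 HG))].
  intros; simpl; ring.
Qed.

Lemma T_div F G a0 a1 b0 b1 : T F a0 a1 -> T G b0 b1 -> b0 <> 0 ->
  T (fun st => F st / G st) (a0 * / b0) (a0 * (- b1 / b0 ^ 2) + a1 * / b0).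
Proof.
  intros HF HG Hb. eapply T_ext; [| apply (T_mul F (fun st => / G st)); [exact HF| apply T_inv; auto]].
  intros; simpl; unfold Rdiv; ring.
Qed.

Lemma T_pow F a0 a1 n : T F a0 a1 -> T (fun st => F st ^ n) (a0 ^ n) (INR n * a0 ^ pred n * a1).
Proof.
  intros HF. induction n.
  - eapply T_eqk; [eapply T_ext; [| apply (T_const 1)]; intros; simpl; ring| simpl; ring| simpl; ring].
  - eapply T_eqk. eapply T_ext; [| apply (T_mul F (fun st => F st ^ n) _ _ _ _ HF IHn)].
    + intros; simpl; ring.
    + simpl; ring.
    + rewrite S_INR. destruct n; simpl; ring.
Qed.

Lemma T_sqrt' F k0 k1 r : T F k0 k1 -> k0 = r * r -> 0 < r ->
  T (fun st => sqrt (F st)) r (k1 / (2 * r)).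
Proof.
  intros HF E Hr. assert (Hk : 0 < k0) by nra.
  assert (Hs : sqrt k0 = r) by (rewrite E; apply sqrt_square; lra).
  eapply T_eqk; [apply T_sqrt; eauto| auto| rewrite Hs; auto].
Qed.

End Tl.
Import Tl.

Module Tb.

Lemma between_abs y c : Rmin 0 y <= c <= Rmax 0 y -> Rabs c <= Rabs y.
Proof.
  unfold Rmin, Rmax. destruct (Rle_dec 0 y); intros [H1 H2];
  unfold Rabs; repeat destruct Rcase_abs; lra.
Qed.

Lemma isd_cont f x d : is_derive f x d -> continuity_pt f x.
Proof. intros H. apply continuity_pt_filterlim. apply (ex_derive_continuous (K:=R_AbsRing) (V:=R_NormedModule)). exists d; auto. Qed.

Lemma mvt0 (f df : R -> R) y : (forall t, is_derive f t (df t)) ->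
  exists c, Rabs c <= Rabs y /\ f y - f 0 = df c * y.
Proof.
  intros H. destruct (MVT_gen f 0 y df) as [c [Hc E]].
  - intros; apply H.
  - intros; eapply isd_cont; apply H.
  - exists c. split; [apply between_abs; auto| rewrite E; ring].
Qed.

Lemma taylor2 (G Gx Gy Gxx : R -> R -> R) r M :
  (forall x y, is_derive (fun t => G t y) x (Gx x y)) ->
  (forall x y, is_derive (fun t => G x t) y (Gy x y)) ->
  (forall x, is_derive (fun t => Gx t 0) x (Gxx x 0)) ->
  (forall x y, Rabs x < r -> Rabs y < r -> Rabs (Gy x y) <= M /\ Rabs (Gxx x 0) <= M) ->
  forall x y, Rabs x < r -> Rabs y < r ->
    Rabs (G x y - G 0 0 - Gx 0 0 * x) <= M * Rabs y + M * x ^ 2.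
Proof.
  intros H1 H2 H3 HB x y Hx Hy. assert (0 < r) by (pose proof (Rabs_pos x); lra).
  destruct (mvt0 (fun t => G x t) (Gy x) y (H2 x)) as [c [Hc Ec]].
  destruct (mvt0 (fun t => G t 0) (fun t => Gx t 0) x (fun t => H1 t 0)) as [xi [Hxi Exi]].
  destruct (mvt0 (fun t => Gx t 0) (fun t => Gxx t 0) xi H3) as [z [Hz Ez]].
  assert (Hc' : Rabs c < r) by lra. assert (Hxi' : Rabs xi < r) by lra. assert (Hz' : Rabs z < r) by lra.
  destruct (HB x c Hx Hc') as [B1 _]. destruct (HB z 0 Hz' ltac:(rewrite Rabs_R0; lra)) as [_ B2].
  replace (G x y - G 0 0 - Gx 0 0 * x) with ((G x y - G x 0) + (Gx xi 0 - Gx 0 0) * x).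
  2:{ replace (G x 0) with (G 0 0 + Gx xi 0 * x) by lra. ring. }
  rewrite Ec, Ez. eapply Rle_trans; [apply Rabs_triang|]. rewrite !Rabs_mult.
  assert (0 <= M) by (eapply Rle_trans; [apply Rabs_pos| exact B1]).
  assert (Rabs (Gy x c) * Rabs y <= M * Rabs y) by (apply Rmult_le_compat_r; [apply Rabs_pos| auto]).
  assert (Rabs (Gxx z 0) * Rabs xi * Rabs x <= M * x ^ 2).
  { replace (x ^ 2) with (Rabs x * Rabs x) by (rewrite <- Rabs_mult; rewrite Rabs_right; [ring| nra]).
    assert (0 <= Rabs xi) by apply Rabs_pos. assert (0 <= Rabs x) by apply Rabs_pos.
    assert (0 <= Rabs (Gxx z 0)) by apply Rabs_pos.
    apply Rle_trans with (M * Rabs x * Rabs x); [|right; ring].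
    apply Rmult_le_compat_r; auto. apply Rmult_le_compat; auto. }
  lra.
Qed.

Lemma T_comp2 (G : R -> R -> R) (gx : R) (U : R -> R) (u1 r M : R) :
  0 < r -> 0 <= M ->
  (forall x y, Rabs x < r -> Rabs y < r -> Rabs (G x y - G 0 0 - gx * x) <= M * Rabs y + M * x ^ 2) ->
  T U 0 u1 ->
  T (fun st => G (U st) (- st ^ 2)) (G 0 0) (gx * u1).
Proof.
  intros Hr HM HG HU.
  destruct (T_small U 0 u1 HU (r / 2) ltac:(lra)) as [C [d [Hd [Hd1 [HC H]]]]].
  exists (M + M * (Rabs u1 + C) ^ 2 + Rabs gx * C), (Rmin d (r / 2)).
  split; [apply Rmin_pos; lra|]. intros st Hs.
  assert (Hs1 : Rabs st < d) by (eapply Rlt_le_trans; [exact Hs| apply Rmin_l]).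
  assert (Hs2 : Rabs st < r / 2) by (eapply Rlt_le_trans; [exact Hs| apply Rmin_r]).
  destruct (H st Hs1) as [He [Hn [Hl [Hsq2 Hsq]]]].
  rewrite Rminus_0_r in Hn, Hl.
  assert (Hx : Rabs (U st) < r) by lra.
  assert (Hy : Rabs (- st ^ 2) < r).
  { rewrite Rabs_Ropp. rewrite Rabs_right by nra. lra. }
  specialize (HG _ _ Hx Hy).
  replace (G (U st) (- st ^ 2) - G 0 0 - gx * u1 * st) with
    ((G (U st) (- st ^ 2) - G 0 0 - gx * U st) + gx * (U st - 0 - u1 * st)) by ring.
  eapply Rle_trans; [apply Rabs_triang|]. rewrite Rabs_mult.
  assert (Rabs gx * Rabs (U st - 0 - u1 * st) <= Rabs gx * (C * st ^ 2)) by (apply Rmult_le_compat_l; [apply Rabs_pos|auto]).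
  rewrite Rabs_Ropp, (Rabs_right (st ^ 2)) in HG by nra.
  assert (U st ^ 2 <= (Rabs u1 + C) ^ 2 * st ^ 2).
  { replace (U st ^ 2) with (Rabs (U st) * Rabs (U st)) by (rewrite <- Rabs_mult; rewrite Rabs_right; [ring| nra]).
    rewrite Hsq. assert (0 <= Rabs (U st)) by apply Rabs_pos. assert (0 <= Rabs st) by apply Rabs_pos.
    assert (0 <= Rabs u1) by apply Rabs_pos.
    replace ((Rabs u1 + C) ^ 2 * (Rabs st * Rabs st)) with (((Rabs u1 + C) * Rabs st) * ((Rabs u1 + C) * Rabs st)) by ring.
    apply Rmult_le_compat; auto. }
  assert (M * U st ^ 2 <= M * ((Rabs u1 + C) ^ 2 * st ^ 2)) by (apply Rmult_le_compat_l; auto).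
  nra.
Qed.

Lemma T_comp1 (g : R -> R) (r M : R) :
  0 < r -> 0 <= M ->
  (forall y, Rabs y < r -> Rabs (g y - g 0) <= M * Rabs y) ->
  T (fun st => g (- st ^ 2)) (g 0) 0.
Proof.
  intros Hr HM HG. exists M, (Rmin 1 r). split; [apply Rmin_pos; lra|]. intros st Hs.
  assert (Hs1 : Rabs st < 1) by (eapply Rlt_le_trans; [exact Hs| apply Rmin_l]).
  assert (Hs2 : Rabs st < r) by (eapply Rlt_le_trans; [exact Hs| apply Rmin_r]).
  assert (Hsq : st ^ 2 = Rabs st * Rabs st) by (rewrite <- Rabs_mult; rewrite Rabs_right; [ring| nra]).
  assert (0 <= Rabs st) by apply Rabs_pos.
  assert (Hy : Rabs (- st ^ 2) < r) by (rewrite Rabs_Ropp, Rabs_right; nra).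
  specialize (HG _ Hy). rewrite Rabs_Ropp, (Rabs_right (st ^ 2)) in HG by nra.
  replace (g (- st ^ 2) - g 0 - 0 * st) with (g (- st ^ 2) - g 0) by ring. auto.
Qed.

Lemma ballR (x y e : R) : Rabs (y - x) < e -> ball x e y.
Proof. intros H. unfold ball; simpl. unfold AbsRing_ball, abs, minus, plus, opp; simpl. exact H. Qed.
Lemma ballR' (x y e : R) : ball x e y -> Rabs (y - x) < e.
Proof. intros H. unfold ball in H; simpl in H. unfold AbsRing_ball, abs, minus, plus, opp in H; simpl in H. exact H. Qed.

Lemma cont_bound1 (g : R -> R) x0 : continuous g x0 ->
  exists r, 0 < r /\ forall x, Rabs (x - x0) < r -> Rabs (g x) <= Rabs (g x0) + 1.
Proof.
  intros H. unfold continuous, filterlim, filter_le, filtermap in H.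
  specialize (H _ (locally_ball (g x0) (mkposreal 1 Rlt_0_1))).
  destruct H as [eps He]. exists eps. split; [apply cond_pos|]. intros x Hx.
  specialize (He x (ballR _ _ _ Hx)). apply ballR' in He. simpl in He.
  assert (Rabs (g x) <= Rabs (g x - g x0) + Rabs (g x0)).
  { replace (g x) with ((g x - g x0) + g x0) at 1 by ring. apply Rabs_triang. }
  lra.
Qed.

Lemma cont_bound2 (F : R -> R -> R) :
  continuous (fun p : R * R => F (fst p) (snd p)) (0, 0) ->
  exists r, 0 < r /\ forall x y, Rabs x < r -> Rabs y < r -> Rabs (F x y) <= Rabs (F 0 0) + 1.
Proof.
  intros H. unfold continuous, filterlim, filter_le, filtermap in H.
  specialize (H _ (locally_ball (F 0 0) (mkposreal 1 Rlt_0_1))).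
  destruct H as [eps He]. exists eps. split; [apply cond_pos|]. intros x y Hx Hy.
  assert (Hb : ball ((0,0) : R * R) eps (x, y)).
  { split; apply ballR; rewrite Rminus_0_r; auto. }
  specialize (He (x, y) Hb). apply ballR' in He. simpl in He.
  assert (Rabs (F x y) <= Rabs (F x y - F 0 0) + Rabs (F 0 0)).
  { replace (F x y) with ((F x y - F 0 0) + F 0 0) at 1 by ring. apply Rabs_triang. }
  lra.
Qed.

Lemma cont_bound3 (F : R -> R -> R -> R) :
  continuous (fun p : R * R * R => F (fst (fst p)) (snd (fst p)) (snd p)) (0, 0, 0) ->
  exists r, 0 < r /\ forall x z, Rabs x < r -> Rabs z < r -> Rabs (F x 0 z) <= Rabs (F 0 0 0) + 1.
Proof.
  intros H. unfold continuous, filterlim, filter_le, filtermap in H.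
  specialize (H _ (locally_ball (F 0 0 0) (mkposreal 1 Rlt_0_1))).
  destruct H as [eps He]. exists eps. split; [apply cond_pos|]. intros x z Hx Hz.
  assert (Hb : ball ((0,0,0) : R * R * R) eps (x, 0, z)).
  { split; [split|]; apply ballR; rewrite ?Rminus_0_r; auto. simpl; rewrite Rabs_R0; apply cond_pos. }
  specialize (He (x, 0, z) Hb). apply ballR' in He. simpl in He.
  assert (Rabs (F x 0 z) <= Rabs (F x 0 z - F 0 0 0) + Rabs (F 0 0 0)).
  { replace (F x 0 z) with ((F x 0 z - F 0 0 0) + F 0 0 0) at 1 by ring. apply Rabs_triang. }
  lra.
Qed.

Lemma ex_cont (g : R -> R) x : ex_derive g x -> continuous g x.
Proof. intros H. apply (ex_derive_continuous (K:=R_AbsRing) (V:=R_NormedModule)). exact H. Qed.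

Lemma T_F1 f n U u1 : smooth1 f -> T U 0 u1 ->
  T (fun st => Derive_n f n (U st)) (Derive_n f n 0) (Derive_n f (S n) 0 * u1).
Proof.
  intros Hf HU.
  destruct (cont_bound1 (Derive_n f (S (S n))) 0 (ex_cont _ _ (Hf (S (S n)) 0))) as [r [Hr Hb]].
  set (M := Rabs (Derive_n f (S (S n)) 0) + 1).
  apply (T_comp2 (fun x y => Derive_n f n x) _ U u1 r M Hr); auto.
  { unfold M; pose proof (Rabs_pos (Derive_n f (S (S n)) 0)); lra. }
  apply (taylor2 (fun x y => Derive_n f n x) (fun x y => Derive_n f (S n) x) (fun _ _ => 0)
    (fun x _ => Derive_n f (S (S n)) x) r M).
  - intros x y. apply Derive_correct. apply Hf.
  - intros x y. apply isd_const.
  - intros x. apply Derive_correct. apply Hf.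
  - intros x y Hx Hy. split.
    + rewrite Rabs_R0. unfold M; pose proof (Rabs_pos (Derive_n f (S (S n)) 0)); lra.
    + apply Hb. rewrite Rminus_0_r; auto.
Qed.

Lemma T_F2 g w U u1 : smooth2 g -> T U 0 u1 ->
  T (fun st => pd2 w g (U st) (- st ^ 2)) (pd2 w g 0 0) (pd2 (w ++ [true]) g 0 0 * u1).
Proof.
  intros Hg HU.
  destruct (cont_bound2 (pd2 (w ++ [false]) g) (proj2 (proj2 (Hg (w ++ [false]) 0 0)))) as [r1 [Hr1 Hb1]].
  destruct (cont_bound2 (pd2 ((w ++ [true]) ++ [true]) g) (proj2 (proj2 (Hg ((w ++ [true]) ++ [true]) 0 0)))) as [r2 [Hr2 Hb2]].
  set (M := Rabs (pd2 (w ++ [false]) g 0 0) + 1 + (Rabs (pd2 ((w ++ [true]) ++ [true]) g 0 0) + 1)).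
  assert (HM : 0 <= M) by (unfold M; pose proof (Rabs_pos (pd2 (w ++ [false]) g 0 0));
     pose proof (Rabs_pos (pd2 ((w ++ [true]) ++ [true]) g 0 0)); lra).
  apply (T_comp2 (pd2 w g) _ U u1 (Rmin r1 r2) M (Rmin_pos _ _ Hr1 Hr2) HM); auto.
  apply (taylor2 (pd2 w g) (pd2 (w ++ [true]) g) (pd2 (w ++ [false]) g)
    (pd2 ((w ++ [true]) ++ [true]) g) (Rmin r1 r2) M).
  - intros x y. rewrite pd2_snoc. apply Derive_correct. apply (proj1 (Hg w x y)).
  - intros x y. rewrite pd2_snoc. apply Derive_correct. apply (proj1 (proj2 (Hg w x y))).
  - intros x. rewrite (pd2_snoc (w ++ [true])). apply Derive_correct. apply (proj1 (Hg (w ++ [true]) x 0)).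
  - intros x y Hx Hy.
    assert (Rabs x < r1) by (eapply Rlt_le_trans; [exact Hx| apply Rmin_l]).
    assert (Rabs x < r2) by (eapply Rlt_le_trans; [exact Hx| apply Rmin_r]).
    assert (Rabs y < r1) by (eapply Rlt_le_trans; [exact Hy| apply Rmin_l]).
    assert (Rabs 0 < r2) by (rewrite Rabs_R0; lra).
    pose proof (Rabs_pos (pd2 (w ++ [false]) g 0 0)).
    pose proof (Rabs_pos (pd2 ((w ++ [true]) ++ [true]) g 0 0)).
    split.
    + specialize (Hb1 x y H H1). unfold M; lra.
    + specialize (Hb2 x 0 H0 H2). unfold M; lra.
Qed.

Lemma T_F3 c w U u1 : smooth3 c -> T U 0 u1 ->
  T (fun st => pd3 w c (U st) 0 (- st ^ 2)) (pd3 w c 0 0 0) (pd3 (w ++ [X1]) c 0 0 0 * u1).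
Proof.
  intros Hc HU.
  destruct (cont_bound3 (pd3 (w ++ [X3]) c) (proj2 (proj2 (proj2 (Hc (w ++ [X3]) 0 0 0))))) as [r1 [Hr1 Hb1]].
  destruct (cont_bound3 (pd3 ((w ++ [X1]) ++ [X1]) c) (proj2 (proj2 (proj2 (Hc ((w ++ [X1]) ++ [X1]) 0 0 0))))) as [r2 [Hr2 Hb2]].
  set (M := Rabs (pd3 (w ++ [X3]) c 0 0 0) + 1 + (Rabs (pd3 ((w ++ [X1]) ++ [X1]) c 0 0 0) + 1)).
  assert (HM : 0 <= M) by (unfold M; pose proof (Rabs_pos (pd3 (w ++ [X3]) c 0 0 0));
     pose proof (Rabs_pos (pd3 ((w ++ [X1]) ++ [X1]) c 0 0 0)); lra).
  apply (T_comp2 (fun x y => pd3 w c x 0 y) _ U u1 (Rmin r1 r2) M (Rmin_pos _ _ Hr1 Hr2) HM); auto.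
  apply (taylor2 (fun x y => pd3 w c x 0 y) (fun x y => pd3 (w ++ [X1]) c x 0 y)
    (fun x y => pd3 (w ++ [X3]) c x 0 y)
    (fun x y => pd3 ((w ++ [X1]) ++ [X1]) c x 0 y) (Rmin r1 r2) M).
  - intros x y. rewrite pd3_snoc. apply Derive_correct. apply (proj1 (Hc w x 0 y)).
  - intros x y. rewrite pd3_snoc. apply Derive_correct. apply (proj1 (proj2 (proj2 (Hc w x 0 y)))).
  - intros x. rewrite (pd3_snoc (w ++ [X1])). apply Derive_correct. apply (proj1 (Hc (w ++ [X1]) x 0 0)).
  - intros x y Hx Hy.
    assert (Rabs x < r1) by (eapply Rlt_le_trans; [exact Hx| apply Rmin_l]).
    assert (Rabs x < r2) by (eapply Rlt_le_trans; [exact Hx| apply Rmin_r]).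
    assert (Rabs y < r1) by (eapply Rlt_le_trans; [exact Hy| apply Rmin_l]).
    assert (Rabs 0 < r2) by (rewrite Rabs_R0; lra).
    pose proof (Rabs_pos (pd3 (w ++ [X3]) c 0 0 0)).
    pose proof (Rabs_pos (pd3 ((w ++ [X1]) ++ [X1]) c 0 0 0)).
    split.
    + specialize (Hb1 x y H H1). unfold M; lra.
    + specialize (Hb2 x 0 H0 H2). unfold M; lra.
Qed.

Lemma T_d (d : R -> R) : smooth1 d -> T (fun st => d (- st ^ 2)) (d 0) 0.
Proof.
  intros Hd.
  destruct (cont_bound1 (Derive_n d 1) 0 (ex_cont _ _ (Hd 1%nat 0))) as [r [Hr Hb]].
  apply (T_comp1 d r (Rabs (Derive_n d 1 0) + 1) Hr).
  { pose proof (Rabs_pos (Derive_n d 1 0)); lra. }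
  intros y Hy.
  destruct (mvt0 d (Derive_n d 1) y) as [c [Hc E]].
  { intros t. apply Derive_correct. apply (Hd 0%nat t). }
  rewrite E, Rabs_mult. apply Rmult_le_compat_r; [apply Rabs_pos|].
  apply Hb. rewrite Rminus_0_r; lra.
Qed.

End Tb.
Import Tb.

Module Ta.

Section TA.
Variables (f21 f31 d1 d2 d3 : R -> R) (f24 f34 c0 d4 : R -> R -> R)
  (c2 c3 : R -> R -> R -> R) (U : R -> R) (d20 : R).
Hypotheses (Sf21 : smooth1 f21) (Sf31 : smooth1 f31) (Sd1 : smooth1 d1) (Sd2 : smooth1 d2)
  (Sd3 : smooth1 d3) (Sf24 : smooth2 f24) (Sf34 : smooth2 f34)
  (Sc0 : smooth2 c0) (Sd4 : smooth2 d4) (Sc2 : smooth3 c2) (Sc3 : smooth3 c3).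
Hypothesis HU : T U 0 (/ d20).

Ltac Tt :=
  match goal with
  | |- T (fun st => ?c) _ _ => apply (T_const c)
  | |- T (fun st => st) _ _ => apply T_id
  | |- T (fun st => U st) _ _ => exact HU
  | |- T (fun st => Derive_n ?f ?n (U st)) _ _ => apply (T_F1 f n U); [assumption| exact HU]
  | |- T (fun st => pd2 ?w ?g (U st) (- st ^ 2)) _ _ => apply (T_F2 g w U); [assumption| exact HU]
  | |- T (fun st => pd3 ?w ?c (U st) 0 (- st ^ 2)) _ _ => apply (T_F3 c w U); [assumption| exact HU]
  | |- T (fun st => ?d (- st ^ 2)) _ _ => apply (T_d d); assumption
  | |- T (fun st => @?F st + @?G st) _ _ => eapply (T_add F G); [Tt| Tt]
  | |- T (fun st => @?F st - @?G st) _ _ => eapply (T_sub F G); [Tt| Tt]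
  | |- T (fun st => @?F st * @?G st) _ _ => eapply (T_mul F G); [Tt| Tt]
  | |- T (fun st => - @?F st) _ _ => eapply (T_opp F); Tt
  | |- T (fun st => @?F st ^ ?n) _ _ => eapply (T_pow F _ _ n); Tt
  | |- T (fun st => @?F st / @?G st) _ _ => eapply (T_div F G); [Tt| Tt| ]
  end.

Lemma T_ext' G F k0 k1 : (forall st, G st = F st) -> T F k0 k1 -> T G k0 k1.
Proof. intros E. apply T_ext. intros; symmetry; auto. Qed.

Definition sB (st : R) : R := - st ^ 2.

Lemma T_Mq : T (fun st => Mq f21 f31 d1 d2 d3 f24 f34 c0 d4 c2 c3 (- st ^ 2) (U st)) 1 (0).
Proof.
  eapply T_eqk. eapply T_ext'.
  { intro st. unfold Mq. rewrite J2_10, J3_10. reflexivity. }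
  Tt. simpl; ring. simpl; ring.
Qed.

Hypothesis Hc00 : pd2 [] c0 0 0 = 0.
Hypothesis Hd20 : d20 <> 0.

Ltac nz := match goal with |- ?e <> 0 => replace e with 1 by (rewrite ?Hc00; ring); lra end.

Lemma T_Nc : T (fun st => Nc f21 f31 d1 d2 d3 f24 f34 c0 d4 c2 c3 (- st ^ 2) (U st)) 4 0.
Proof.
  eapply T_eqk. eapply T_ext'.
  { intro st. unfold Nc. rewrite J2_10, J3_10, J3_02. reflexivity. }
  Tt. simpl; rewrite Hc00; ring. simpl; rewrite Hc00; ring.
Qed.

Lemma T_Kb : T (fun st => Kb f21 f31 d1 d2 d3 f24 f34 c0 d4 c2 c3 (- st ^ 2) (U st))
  (48 * pd3 [] c2 0 0 0) (48 * (pd3 [X1] c2 0 0 0 - 2 * Derive_n f21 0 0 * pd2 [true] c0 0 0) * / d20).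
Proof.
  eapply T_eqk. eapply T_ext'.
  { intro st. unfold Kb, qq, Mq. rewrite J2_10, J3_10, J3_02, J2_20, J3_20, J3_12, J3_04.
    reflexivity. }
  Tt. all: try nz.
  - simpl; rewrite Hc00; field.
  - simpl; rewrite Hc00; field. auto.
Qed.

Lemma T_Kc : T (fun st => Kc f21 f31 d1 d2 d3 f24 f34 c0 d4 c2 c3 (- st ^ 2) (U st))
  (720 * pd3 [] c3 0 0 0) (720 * pd3 [X1] c3 0 0 0 * / d20).
Proof.
  eapply T_eqk. eapply T_ext'.
  { intro st. unfold Kc, qq, Mq. rewrite J2_10, J3_10, J3_02, J3_13, J3_05.
    reflexivity. }
  Tt. all: try nz.
  - simpl; rewrite Hc00; field.
  - simpl; rewrite Hc00; field. auto.
Qed.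

Definition Bfun (st : R) : R :=
  Mq f21 f31 d1 d2 d3 f24 f34 c0 d4 c2 c3 (- st ^ 2) (U st) *
  Kb f21 f31 d1 d2 d3 f24 f34 c0 d4 c2 c3 (- st ^ 2) (U st) /
  sqrt (Nc f21 f31 d1 d2 d3 f24 f34 c0 d4 c2 c3 (- st ^ 2) (U st)) ^ 3.

Definition Cfun (st : R) : R :=
  sqrt (sqrt (Mq f21 f31 d1 d2 d3 f24 f34 c0 d4 c2 c3 (- st ^ 2) (U st))) ^ 5 *
  Kc f21 f31 d1 d2 d3 f24 f34 c0 d4 c2 c3 (- st ^ 2) (U st) /
  sqrt (sqrt (Nc f21 f31 d1 d2 d3 f24 f34 c0 d4 c2 c3 (- st ^ 2) (U st))) ^ 7.

Lemma T_B : T Bfun (6 * pd3 [] c2 0 0 0)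
  (6 * (-2 * Derive_n f21 0 0 * pd2 [true] c0 0 0 + pd3 [X1] c2 0 0 0) / d20).
Proof.
  eapply T_eqk.
  apply (T_div (fun st => Mq f21 f31 d1 d2 d3 f24 f34 c0 d4 c2 c3 (- st ^ 2) (U st) *
     Kb f21 f31 d1 d2 d3 f24 f34 c0 d4 c2 c3 (- st ^ 2) (U st))
    (fun st => sqrt (Nc f21 f31 d1 d2 d3 f24 f34 c0 d4 c2 c3 (- st ^ 2) (U st)) ^ 3)).
  - apply (T_mul _ _ _ _ _ _ T_Mq T_Kb).
  - apply T_pow. apply (T_sqrt' _ 4 0 2 T_Nc); lra.
  - simpl; lra.
  - field.
  - simpl. field. auto.
Qed.

Lemma T_C : T Cfun (45 * sqrt 2 * pd3 [] c3 0 0 0) (45 * sqrt 2 * pd3 [X1] c3 0 0 0 / d20).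
Proof.
  assert (H2 : sqrt 2 * sqrt 2 = 2) by (apply sqrt_sqrt; lra).
  assert (H2p : 0 < sqrt 2) by (apply sqrt_lt_R0; lra).
  eapply T_eqk.
  apply (T_div (fun st => sqrt (sqrt (Mq f21 f31 d1 d2 d3 f24 f34 c0 d4 c2 c3 (- st ^ 2) (U st))) ^ 5 *
     Kc f21 f31 d1 d2 d3 f24 f34 c0 d4 c2 c3 (- st ^ 2) (U st))
    (fun st => sqrt (sqrt (Nc f21 f31 d1 d2 d3 f24 f34 c0 d4 c2 c3 (- st ^ 2) (U st))) ^ 7)).
  - apply T_mul; [|apply T_Kc]. apply T_pow.
    eapply (T_sqrt' _ 1 _ 1); [apply (T_sqrt' _ 1 0 1 T_Mq)|..]; lra.
  - apply T_pow. eapply (T_sqrt' _ 2 _ (sqrt 2)); [apply (T_sqrt' _ 4 0 2 T_Nc)|..]; lra.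
  - apply pow_nonzero; lra.
  - assert (E7 : sqrt 2 ^ 7 = 8 * sqrt 2) by
      (replace (sqrt 2 ^ 7) with ((sqrt 2 * sqrt 2) ^ 3 * sqrt 2) by ring; rewrite H2; ring).
    rewrite E7. apply (Rmult_eq_reg_r (sqrt 2)); [|lra]. field_simplify; [|lra].
    rewrite pow2_sqrt by lra. field.
  - assert (E7 : sqrt 2 ^ 7 = 8 * sqrt 2) by
      (replace (sqrt 2 ^ 7) with ((sqrt 2 * sqrt 2) ^ 3 * sqrt 2) by ring; rewrite H2; ring).
    rewrite E7. simpl pred.
    replace (0 / (2 * 2) / (2 * sqrt 2)) with 0 by (field; lra).
    replace (0 / (2 * 1) / (2 * 1)) with 0 by field.
    apply (Rmult_eq_reg_r (sqrt 2)); [|lra]. field_simplify; [| try (split; [lra|auto]); try lra; auto ..].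
    rewrite ?pow2_sqrt by lra. field. repeat split; auto; lra.
Qed.


End TA.

End Ta.
Import Ta.

Module MainM.

Lemma repeat_snoc (n : nat) : repeat true (S n) = repeat true n ++ [true].
Proof. induction n; simpl; auto. rewrite <- IHn. reflexivity. Qed.

Lemma forallb_repeat (w : list bool) : forallb (fun t => t) w = true -> w = repeat true (length w).
Proof.
  induction w as [|c w IH]; simpl; auto. intros H. apply Bool.andb_true_iff in H.
  destruct H as [H1 H2]. subst c. rewrite <- IH; auto.
Qed.

Lemma zero_ball (g : R -> R -> R) u0 eps :
  (forall x, Rabs (x - u0) < eps -> g x 0 = 0) ->
  forall n x, Rabs (x - u0) < eps -> pd2 (repeat true n) g x 0 = 0.
Proof.
  intros H n. induction n; intros x Hx.
  - simpl. apply H; auto.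
  - rewrite repeat_snoc, pd2_snoc. unfold pdu.
    rewrite (Derive_ext_loc _ (fun _ => 0)).
    + apply Derive_const.
    + assert (He : 0 < eps - Rabs (x - u0)) by lra.
      exists (mkposreal _ He). intros t Ht. apply ballR' in Ht. simpl in Ht.
      apply IHn.
      replace (t - u0) with ((t - x) + (x - u0)) by ring.
      eapply Rle_lt_trans; [apply Rabs_triang| lra].
Qed.

Section Link.
Variables (f21 f31 d1 d2 d3 : R -> R) (f24 f34 c0 d4 : R -> R -> R)
  (c2 c3 : R -> R -> R -> R) (s0 : R) (a b : R -> R -> R).
Hypotheses (Sf21 : smooth1 f21) (Sf31 : smooth1 f31) (Sf24 : smooth2 f24) (Sf34 : smooth2 f34)
  (Sc0 : smooth2 c0) (Sd4 : smooth2 d4) (Sc2 : smooth3 c2) (Sc3 : smooth3 c3)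
  (Sa : smooth2 a) (Sb : smooth2 b).

Definition hh : R -> R -> V3 := fun u v => f_of f21 f31 f24 f34 (f32_of c0 (c1_of d1 d2 d3 d4) c2 c3) u v s0.
Local Notation envE := (Eta.envE f21 f31 d1 d2 d3 f24 f34 c0 d4 c2 c3 s0 a b).

Lemma h_eq2 : hh = fun x y => mkV (h1f s0 x y) (h2f f21 f24 s0 x y) (h3f f31 d1 d2 d3 f34 c0 d4 c2 c3 s0 x y).
Proof.
  extensionality x; extensionality y. unfold hh, f_of, f32_of, c1_of, h1f, h2f, h3f, H1P, H2P, H3P.
  assert (Ey : y ^ 2 = y * y) by ring. rewrite Ey.
  cbn [evP evM prodA evA INR]. cbv [pd2 pd3]. cbn [Derive_n].
  unfold mkV. f_equal; [f_equal|]; ring.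
Qed.

Lemma h_eq : hh = fun x y => mkV (evP envE s0 [(1%nat,0%nat,0%nat,[AG 2 []])] x y)
   (evP envE s0 [(1%nat,0%nat,0%nat,[AG 3 []])] x y) (evP envE s0 [(1%nat,0%nat,0%nat,[AG 4 []])] x y).
Proof.
  rewrite h_eq2. extensionality x; extensionality y. cbn [evP evM prodA evA INR nth Eta.envE].
  cbv [pd2]. unfold mkV. f_equal; [f_equal|]; ring.
Qed.

Lemma WFP_single k : (2 <= k <= 4)%nat -> WFP envE [(1%nat,0%nat,0%nat,[AG k []])].
Proof.
  intros Hk m Hm. destruct Hm as [<-|[]]. simpl. constructor; [|constructor].
  simpl. destruct k as [|[|[|[|[|k]]]]]; try lia; simpl.
  - apply Good_evP, WF_H1.
  - apply Good_evP, WF_H2; auto.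
  - apply Good_evP, WF_H3; auto.
Qed.

Lemma etaPow_hh k : etaPow a b k hh = fun x y =>
  mkV (evP envE s0 (etaPn k [(1%nat,0%nat,0%nat,[AG 2 []])]) x y)
      (evP envE s0 (etaPn k [(1%nat,0%nat,0%nat,[AG 3 []])]) x y)
      (evP envE s0 (etaPn k [(1%nat,0%nat,0%nat,[AG 4 []])]) x y).
Proof.
  apply etaPow_evP; auto; try (apply smooth2_Good; auto); try apply WFP_single; try lia.
  apply h_eq.
Qed.

Lemma map_u_hh u0 : map_u hh u0 0 = huV f21 f31 d1 d2 d3 f24 f34 c0 d4 c2 c3 s0 u0.
Proof.
  unfold map_u. rewrite h_eq2. cbn [v1 v2 v3 mkV fst snd].
  change (pdu (fun x y => h1f s0 x y) u0 0) with (pd2 [true] (h1f s0) u0 0).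
  change (pdu (fun x y => h2f f21 f24 s0 x y) u0 0) with (pd2 [true] (h2f f21 f24 s0) u0 0).
  change (pdu (fun x y => h3f f31 d1 d2 d3 f34 c0 d4 c2 c3 s0 x y) u0 0)
    with (pd2 [true] (h3f f31 d1 d2 d3 f34 c0 d4 c2 c3 s0) u0 0).
  rewrite hw_h1_u, hw_h2_u, hw_h3_u by assumption. reflexivity.
Qed.

Lemma a_zero x : etaPow a b 1 hh x 0 = vzero -> a x 0 = 0.
Proof.
  intros H. rewrite etaPow_hh in H. apply (f_equal v1) in H. cbn [v1 mkV fst snd vzero] in H.
  cbv [etaPn etaP dPu dPv flat_map dMon dL dAu dAv app map addA Nat.mul Nat.add] in H.
  cbn [evP evM prodA evA INR pow nth Eta.envE] in H.
  rewrite !pd2_h1 in H. cbv [dWP dPu dPv flat_map dMon dL dAu dAv app map H1P Nat.mul Nat.add] in H.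
  cbn [evP evM prodA evA INR pow] in H. cbv [pd2] in H. unfold vzero, mkV in H; simpl in H.
  lra.
Qed.

Lemma etaPow_Ev u0 k : etaPow a b k hh u0 0 = Ev f21 f31 d1 d2 d3 f24 f34 c0 d4 c2 c3 s0 u0 a b k.
Proof. rewrite etaPow_hh. reflexivity. Qed.

End Link.


End MainM.
Import MainM.

Theorem theorem4p5
  (f21 f31 d1 d2 d3 : R -> R) (f24 f34 c0 d4 : R -> R -> R)
  (c2 c3 : R -> R -> R -> R) (ufun : R -> R) :
  smooth1 f21 -> smooth1 f31 -> smooth1 d1 -> smooth1 d2 -> smooth1 d3 ->
  smooth2 f24 -> smooth2 f34 -> smooth2 c0 -> smooth2 d4 ->
  smooth3 c2 -> smooth3 c3 ->
  c0 0 0 = 0 -> c3 0 0 0 <> 0 -> 0 < d2 0 ->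
  let c1 := c1_of d1 d2 d3 d4 in
  let f := f_of f21 f31 f24 f34 (f32_of c0 c1 c2 c3) in
  let d20 := sqrt (d2 0) in
  (* u(s~): smooth, c1(u(s~), -s~^2) = 0 for small s~ <> 0, u(s~) = s~/d20 + O(s~^2) *)
  smooth1 ufun ->
  (exists delta : R, 0 < delta /\
     forall st : R, 0 < Rabs st < delta -> c1 (ufun st) (- st ^ 2) = 0) ->
  (exists C delta : R, 0 < delta /\
     forall st : R, Rabs st < delta -> Rabs (ufun st - st / d20) <= C * st ^ 2) ->
  exists C delta : R, 0 < delta /\
    forall st : R, 0 < Rabs st < delta ->
      let h := fun u v => f u v (- st ^ 2) in
      forall (a b : R -> R -> R) (l : R),
        admissible_field h (ufun st) a b ->
        etaPow a b 3 h (ufun st) 0 = vscale l (etaPow a b 2 h (ufun st) 0) ->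
        Rabs (bias h a b (ufun st)
              - (6 * c2 0 0 0
                 + 6 * (- 2 * f21 0 * pdu c0 0 0 + pd3_1 c2 0 0 0) / d20 * st))
          <= C * st ^ 2 /\
        Rabs (sec_cusp_curv h a b l (ufun st)
              - (45 * sqrt 2 * c3 0 0 0
                 + 45 * sqrt 2 * pd3_1 c3 0 0 0 / d20 * st))
          <= C * st ^ 2.
Proof.
  intros Sf21 Sf31 Sd1 Sd2 Sd3 Sf24 Sf34 Sc0 Sd4 Sc2 Sc3 Hc00 Hc3 Hd2 c1 f d20 Su Hroot Hasym.
  destruct Hroot as [dr [Hdr Hroot]].
  assert (Hd20 : 0 < d20) by (apply sqrt_lt_R0; lra).
  assert (Hd20ne : d20 <> 0) by lra.
  assert (HU : T ufun 0 (/ d20)).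
  { destruct Hasym as [C [d [Hd H]]]. exists C, d. split; auto. intros st Hs.
    replace (ufun st - 0 - / d20 * st) with (ufun st - st / d20) by (field; lra). auto. }
  assert (Hc00' : pd2 [] c0 0 0 = 0) by exact Hc00.
  assert (TB := T_B f21 f31 d1 d2 d3 f24 f34 c0 d4 c2 c3 ufun d20 Sf21 Sf31 Sf24 Sf34 Sc0 Sc2 HU Hc00' Hd20ne).
  assert (TC := T_C f21 f31 d1 d2 d3 f24 f34 c0 d4 c2 c3 ufun d20 Sf21 Sf31 Sd1 Sd2 Sd3 Sf24 Sf34 Sc0 Sd4 Sc3 HU Hc00' Hd20ne).
  destruct TB as [CB [dB [HdB TB]]]. destruct TC as [CC [dC [HdC TC]]].
  exists (Rmax CB CC), (Rmin dr (Rmin dB dC)).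
  split; [apply Rmin_pos; [lra| apply Rmin_pos; lra]|].
  intros st Hst h a b l Hadm Hl.
  assert (Hs1 : Rabs st < dr) by (eapply Rlt_le_trans; [apply Hst| apply Rmin_l]).
  assert (Hs2 : Rabs st < dB) by (eapply Rlt_le_trans; [apply Hst| eapply Rle_trans; [apply Rmin_r| apply Rmin_l]]).
  assert (Hs3 : Rabs st < dC) by (eapply Rlt_le_trans; [apply Hst| eapply Rle_trans; [apply Rmin_r| apply Rmin_r]]).
  assert (Hh : h = hh f21 f31 d1 d2 d3 f24 f34 c0 d4 c2 c3 (- st ^ 2)) by reflexivity.
  rewrite Hh in *. clear Hh.
  destruct Hadm as [Sa [Sb [Hb0 [eps [Heps Hx]]]]].
  set (u0 := ufun st) in *. set (s0 := - st ^ 2) in *.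
  assert (Hz : forall w, forallb (fun t => t) w = true -> pd2 w a u0 0 = 0).
  { intros w Hw. rewrite (forallb_repeat w Hw).
    apply (zero_ball a u0 eps); [|rewrite Rminus_diag, Rabs_R0; auto].
    intros x Hxe. apply (a_zero f21 f31 d1 d2 d3 f24 f34 c0 d4 c2 c3 s0 a b); auto.
    apply (Hx x Hxe). }
  destruct (Hx u0) as [_ [HC2 HC3]]; [rewrite Rminus_diag, Rabs_R0; auto|].
  rewrite map_u_hh, !etaPow_Ev in HC2, HC3 by auto.
  rewrite !etaPow_Ev in Hl by auto.
  assert (HJ : J3 f31 d1 d2 d3 f34 c0 d4 c2 c3 s0 u0 0 3 = 0).
  { rewrite J3_03. specialize (Hroot st (conj (proj1 Hst) Hs1)).
    change (6 * c1 u0 s0 = 0). fold u0 s0 in Hroot. rewrite Hroot. ring. }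
  assert (Hb : 0 < B u0 b []) by exact Hb0.
  split.
  - unfold bias. rewrite map_u_hh, !etaPow_Ev by auto.
    rewrite (bias_val f21 f31 d1 d2 d3 f24 f34 c0 d4 c2 c3 s0 u0 a b) by auto.
    specialize (TB st Hs2).
    change (c2 0 0 0) with (pd3 [] c2 0 0 0). change (f21 0) with (Derive_n f21 0 0).
    change (pdu c0 0 0) with (pd2 [true] c0 0 0). change (pd3_1 c2 0 0 0) with (pd3 [X1] c2 0 0 0).
    unfold Bfun in TB. fold s0 u0 in TB.
    eapply Rle_trans; [| apply Rmult_le_compat_r; [apply pow2_ge_0| apply Rmax_l]].
    eapply Rle_trans; [| apply TB]. right. f_equal. ring.
  - unfold sec_cusp_curv. rewrite map_u_hh, !etaPow_Ev by auto.
    rewrite (rc_val f21 f31 d1 d2 d3 f24 f34 c0 d4 c2 c3 s0 u0 a b) by auto.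
    specialize (TC st Hs3).
    change (c3 0 0 0) with (pd3 [] c3 0 0 0).
    change (pd3_1 c3 0 0 0) with (pd3 [X1] c3 0 0 0).
    unfold Cfun in TC. fold s0 u0 in TC.
    eapply Rle_trans; [| apply Rmult_le_compat_r; [apply pow2_ge_0| apply Rmax_r]].
    eapply Rle_trans; [| apply TC]. right. f_equal. ring.
Qed.
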